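(* Let $N\ge1$ and for $1\le i\le N$ and integers $x\ge1$ let $\Theta_i(x)=\binom{x+i-2}{x-1}$. Then for all $1\le i,j\le N$, \[\sum_{x=1}^\infty\sum_{y=1}^\infty\Theta_i(x)\,Q_{1,1}(x,y)\,\Theta_j(y)=Q_{i+1,j+1}(1,1).\]
   Context: Fix $\alpha\ge0$, $t\ge0$. For integers $k,\ell,x,y$, \[Q_{k,\ell}(x,y)=\alpha^2\oint_\beta\frac{{\rm d} v}{2\pi\mathrm{i}}\oint_\beta\frac{{\rm d} w}{2\pi\mathrm{i}}\frac{v-w}{1-v-w}\frac{w^{k-x}\mathrm{e}^{t(w-1)}}{(w-\alpha)(w-1)^k}\frac{v^{\ell-y}\mathrm{e}^{t(v-1)}}{(v-\alpha)(v-1)^\ell},\] where $\beta$ is a positively oriented closed contour surrounding $0,1,\alpha,1-\alpha$ and omitting other singularities (the apparent singularity at $v+w=1$ contributes nothing). *)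

(* Defs.v *)
From Stdlib Require Import Reals ZArith.
From Coquelicot Require Import Coquelicot.
Open Scope R_scope.

Definition Cexpo (z : C) : C :=
  (exp (Re z) * cos (Im z), exp (Re z) * sin (Im z)).

Definition Czpow (z : C) (n : Z) : C :=
  match n with
  | Z0 => RtoC 1
  | Zpos p => Cpow z (Pos.to_nat p)
  | Zneg p => Cinv (Cpow z (Pos.to_nat p))
  end.

Definition Gfac (alpha t : R) (k x : Z) (w : C) : C :=
  Cdiv (Cmult (Czpow w (k - x)) (Cexpo (Cmult (RtoC t) (Cminus w (RtoC 1)))))
       (Cmult (Cminus w (RtoC alpha)) (Czpow (Cminus w (RtoC 1)) k)).

Definition Qintegrand (alpha t : R) (k l x y : Z) (v w : C) : C :=
  Cmult (Cmult (Cdiv (Cminus v w) (Cminus (Cminus (RtoC 1) v) w))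
               (Gfac alpha t k x w))
        (Gfac alpha t l y v).

(* The points 0, 1, alpha, 1 - alpha all lie at distance <= rho alpha from 1/2. *)
Definition rho (alpha : R) : R := Rmax (1/2) (Rabs (alpha - 1/2)).

Definition circ (r th : R) : C := (1/2 + r * cos th, r * sin th).
(* r e^{i th}: the factor  (dz/d th) / i  for that parametrisation *)
Definition circ_jac (r th : R) : C := (r * cos th, r * sin th).

(* Q_{k,l}(x,y) with the v-contour the circle |v - 1/2| = R1 and the
   w-contour the circle |w - 1/2| = R2 (positively oriented):
   oint dz/(2 pi i) f(z) = 1/(2 pi) int_0^{2pi} f(circ r th) r e^{i th} dth. *)
Definition Q (R1 R2 alpha t : R) (k l x y : Z) : C :=
  Cmult (RtoC (alpha ^ 2 / (2 * PI) ^ 2))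
   (RInt (V := C_R_CompleteNormedModule) (fun th =>
      RInt (V := C_R_CompleteNormedModule) (fun ph =>
        Cmult (Cmult (Qintegrand alpha t k l x y (circ R1 th) (circ R2 ph))
                     (circ_jac R1 th))
              (circ_jac R2 ph)) 0 (2 * PI)) 0 (2 * PI)).

Definition Theta (i x : nat) : R := Binomial.C (x + i - 2) (x - 1).

(* Main.v *)
Require Import Defs.
From Stdlib Require Import Reals ZArith Lra Lia Psatz FunctionalExtensionality.
From Coquelicot Require Import Coquelicot.
Open Scope R_scope.


Lemma norm_C (z : C) : norm (K:=R_AbsRing) (V:=C_R_NormedModule) z = Cmod z.
Proof.
  destruct z as [a b]. unfold norm; simpl. unfold prod_norm, Cmod; simpl.
  change (norm a) with (Rabs a). change (norm b) with (Rabs b).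
  rewrite !Rmult_1_r, <- !Rabs_mult, !Rabs_pos_eq by nra. reflexivity.
Qed.

Lemma is_derive_C (f : R -> C) x (l : C) :
  is_derive (fun t => fst (f t)) x (fst l) ->
  is_derive (fun t => snd (f t)) x (snd l) ->
  is_derive (K:=R_AbsRing) (V:=C_R_NormedModule) f x l.
Proof.
  intros H1 H2. unfold is_derive in *.
  assert (H := filterdiff_comp'_2 (K:=R_AbsRing) (T:=R_NormedModule) (U:=R_NormedModule) (V:=R_NormedModule) (W:=C_R_NormedModule)
     (fun t => fst (f t)) (fun t => snd (f t)) (fun a b => (a,b)) x _ _ (fun a b => (a,b)) H1 H2).
  assert (H3 : filterdiff (K:=R_AbsRing) (U:=prod_NormedModule R_AbsRing R_NormedModule R_NormedModule) (V:=C_R_NormedModule) (fun t => (fst t, snd t)) (locally (fst (f x), snd (f x))) (fun t => (fst t, snd t))).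
  { apply filterdiff_ext_lin with (fun t => t).
    apply filterdiff_ext with (fun t => t). intros [a b]; reflexivity.
    apply filterdiff_id. intros [a b]; reflexivity. }
  specialize (H H3).
  apply filterdiff_ext with (fun y => (fst (f y), snd (f y))). intros y; destruct (f y); reflexivity.
  apply filterdiff_ext_lin with (1 := H). intros y. destruct l; reflexivity.
Qed.

Lemma is_derive_C_fst (f : R -> C) x (l : C) :
  is_derive (K:=R_AbsRing) (V:=C_R_NormedModule) f x l ->
  is_derive (fun t => fst (f t)) x (fst l).
Proof.
  intros H. unfold is_derive in *.
  apply (filterdiff_comp' f (fun p : C_R_NormedModule => fst p) x _ (fun p : C_R_NormedModule => fst p)) in H.
  - apply filterdiff_ext_lin with (1 := H). intros y. reflexivity.
  - apply filterdiff_linear. apply is_linear_fst.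
Qed.

Lemma is_derive_C_snd (f : R -> C) x (l : C) :
  is_derive (K:=R_AbsRing) (V:=C_R_NormedModule) f x l ->
  is_derive (fun t => snd (f t)) x (snd l).
Proof.
  intros H. unfold is_derive in *.
  apply (filterdiff_comp' f (fun p : C_R_NormedModule => snd p) x _ (fun p : C_R_NormedModule => snd p)) in H.
  - apply filterdiff_ext_lin with (1 := H). intros y. reflexivity.
  - apply filterdiff_linear. apply is_linear_snd.
Qed.


Definition isdC (g : R -> C) x l := is_derive (K:=R_AbsRing) (V:=C_R_NormedModule) g x l.

Lemma isd_eq (f : R -> R) x l l' : is_derive f x l -> l = l' -> is_derive f x l'.
Proof. intros H ->; exact H. Qed.
Lemma isdC_eq g x (l l' : C) : isdC g x l -> l = l' -> isdC g x l'.
Proof. intros H ->; exact H. Qed.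

Lemma isd_mult (f g : R -> R) x df dg : is_derive f x df -> is_derive g x dg ->
  is_derive (fun t => f t * g t) x (df * g x + f x * dg).
Proof. intros H1 H2. apply (is_derive_mult f g x df dg H1 H2). intros; apply Rmult_comm. Qed.
Lemma isd_plus (f g : R -> R) x df dg : is_derive f x df -> is_derive g x dg ->
  is_derive (fun t => f t + g t) x (df + dg).
Proof. intros H1 H2. apply (is_derive_plus f g x df dg H1 H2). Qed.
Lemma isd_minus (f g : R -> R) x df dg : is_derive f x df -> is_derive g x dg ->
  is_derive (fun t => f t - g t) x (df - dg).
Proof. intros H1 H2. apply (is_derive_minus f g x df dg H1 H2). Qed.
Lemma isd_exp (f : R -> R) x df : is_derive f x df -> is_derive (fun t => exp (f t)) x (exp (f x) * df).
Proof. intros H. eapply isd_eq. apply (is_derive_comp exp f x). apply is_derive_exp. exact H.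
  simpl. unfold scal; simpl; unfold mult; simpl. ring. Qed.
Lemma isd_cos (f : R -> R) x df : is_derive f x df -> is_derive (fun t => cos (f t)) x (- sin (f x) * df).
Proof. intros H. eapply isd_eq. apply (is_derive_comp cos f x). apply is_derive_cos. exact H.
  simpl. unfold scal; simpl; unfold mult; simpl. ring. Qed.
Lemma isd_sin (f : R -> R) x df : is_derive f x df -> is_derive (fun t => sin (f t)) x (cos (f x) * df).
Proof. intros H. eapply isd_eq. apply (is_derive_comp sin f x). apply is_derive_sin. exact H.
  simpl. unfold scal; simpl; unfold mult; simpl. ring. Qed.

Lemma isdC_fst g x l : isdC g x l -> is_derive (fun t => fst (g t)) x (fst l).
Proof. apply is_derive_C_fst. Qed.
Lemma isdC_snd g x l : isdC g x l -> is_derive (fun t => snd (g t)) x (snd l).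
Proof. apply is_derive_C_snd. Qed.

Lemma isdC_mult g h x l m : isdC g x l -> isdC h x m ->
  isdC (fun t => Cmult (g t) (h t)) x (Cplus (Cmult l (h x)) (Cmult (g x) m)).
Proof.
  intros Hg Hh. apply is_derive_C.
  - apply isd_eq with (fst l * fst (h x) + fst (g x) * fst m - (snd l * snd (h x) + snd (g x) * snd m)).
    + simpl. apply isd_minus; apply isd_mult; auto using isdC_fst, isdC_snd.
    + destruct l, m, (g x), (h x); simpl; ring.
  - apply isd_eq with (fst l * snd (h x) + fst (g x) * snd m + (snd l * fst (h x) + snd (g x) * fst m)).
    + simpl. apply isd_plus; apply isd_mult; auto using isdC_fst, isdC_snd.
    + destruct l, m, (g x), (h x); simpl; ring.
Qed.

Lemma isdC_plus g h x l m : isdC g x l -> isdC h x m ->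
  isdC (fun t => Cplus (g t) (h t)) x (Cplus l m).
Proof.
  intros Hg Hh. apply is_derive_C; simpl; apply isd_plus; auto using isdC_fst, isdC_snd.
Qed.

Lemma isdC_const (c : C) x : isdC (fun _ => c) x (RtoC 0).
Proof. apply is_derive_C; simpl. apply (is_derive_const (K:=R_AbsRing) (V:=R_NormedModule)). apply (is_derive_const (K:=R_AbsRing) (V:=R_NormedModule)). Qed.



Lemma isdC_exp g x l : isdC g x l ->
  isdC (fun t => Cexpo (g t)) x (Cmult (Cexpo (g x)) l).
Proof.
  intros Hg. unfold Cexpo. apply is_derive_C.
  - apply isd_eq with (exp (Re (g x)) * fst l * cos (Im (g x)) + exp (Re (g x)) * (- sin (Im (g x)) * snd l)).
    + simpl. apply (isd_mult (fun t => exp (Re (g t))) (fun t => cos (Im (g t)))).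
      apply isd_exp. apply isdC_fst; auto. apply isd_cos. apply isdC_snd; auto.
    + unfold Re, Im; destruct l, (g x); simpl; ring.
  - apply isd_eq with (exp (Re (g x)) * fst l * sin (Im (g x)) + exp (Re (g x)) * (cos (Im (g x)) * snd l)).
    + simpl. apply (isd_mult (fun t => exp (Re (g t))) (fun t => sin (Im (g t)))).
      apply isd_exp. apply isdC_fst; auto. apply isd_sin. apply isdC_snd; auto.
    + unfold Re, Im; destruct l, (g x); simpl; ring.
Qed.

Lemma C_neq0 (z : C) : z <> RtoC 0 -> fst z ^ 2 + snd z ^ 2 <> 0.
Proof.
  intros H. destruct z as [a b]. simpl. intro E. apply H.
  assert (a = 0) by nra. assert (b = 0) by nra. subst. reflexivity.
Qed.

Lemma isdC_inv g x l : isdC g x l -> g x <> RtoC 0 ->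
  isdC (fun t => Cinv (g t)) x (Copp (Cdiv l (Cmult (g x) (g x)))).
Proof.
  intros Hg Hz. pose proof (C_neq0 _ Hz) as Hn.
  assert (E1 := isdC_fst _ _ _ Hg). assert (E2 := isdC_snd _ _ _ Hg).
  assert (D : is_derive (fun t => fst (g t) ^ 2 + snd (g t) ^ 2) x
                (INR 2 * fst l * fst (g x) ^ pred 2 + INR 2 * snd l * snd (g x) ^ pred 2)).
  { apply (isd_plus (fun t => fst (g t) ^ 2) (fun t => snd (g t) ^ 2)); apply is_derive_pow; auto. }
  apply is_derive_C.
  - eapply isd_eq. unfold Cinv; simpl.
    apply (is_derive_div (fun t => fst (g t)) (fun t => fst (g t) ^ 2 + snd (g t) ^ 2)).
    exact E1. exact D. exact Hn.
    destruct l as [l1 l2]. destruct (g x) as [a b]. simpl in *. unfold Cdiv, Cinv; simpl. field.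
    assert (a * a + b * b <> 0) by (intro E; apply Hn; nra).
    split; [|auto]. intro E; apply H. nra.
  - eapply isd_eq. unfold Cinv; simpl.
    assert (E3 : is_derive (fun t => - snd (g t)) x (- snd l)).
    { apply (is_derive_opp (fun t => snd (g t))). exact E2. }
    apply (is_derive_div (fun t => - snd (g t)) (fun t => fst (g t) ^ 2 + snd (g t) ^ 2)).
    exact E3. exact D. exact Hn.
    destruct l as [l1 l2]. destruct (g x) as [a b]. simpl in *. unfold Cdiv, Cinv, opp; simpl. field.
    assert (a * a + b * b <> 0) by (intro E; apply Hn; nra).
    split; [|auto]. intro E; apply H. nra.
Qed.


Definition cont2 (F : R -> R -> C) x y :=
  continuity_2d_pt (fun a b => fst (F a b)) x y /\ continuity_2d_pt (fun a b => snd (F a b)) x y.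

Lemma cont_Rinv y : y <> 0 -> continuity_pt Rinv y.
Proof.
  intros H. apply (continuity_pt_inv id y).
  apply derivable_continuous_pt, derivable_pt_id. exact H.
Qed.

Lemma cont2_const c x y : cont2 (fun _ _ => c) x y.
Proof. split; apply continuity_2d_pt_const. Qed.

Lemma cont2_plus F G x y : cont2 F x y -> cont2 G x y -> cont2 (fun a b => Cplus (F a b) (G a b)) x y.
Proof. intros [H1 H2] [H3 H4]; split; simpl; apply continuity_2d_pt_plus; auto. Qed.

Lemma cont2_opp F x y : cont2 F x y -> cont2 (fun a b => Copp (F a b)) x y.
Proof. intros [H1 H2]; split; simpl; apply continuity_2d_pt_opp; auto. Qed.

Lemma cont2_mult F G x y : cont2 F x y -> cont2 G x y -> cont2 (fun a b => Cmult (F a b) (G a b)) x y.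
Proof.
  intros [H1 H2] [H3 H4]; split; simpl.
  apply continuity_2d_pt_minus; apply continuity_2d_pt_mult; auto.
  apply continuity_2d_pt_plus; apply continuity_2d_pt_mult; auto.
Qed.

Lemma cont2_inv F x y : cont2 F x y -> F x y <> RtoC 0 -> cont2 (fun a b => Cinv (F a b)) x y.
Proof.
  intros [H1 H2] Hz. pose proof (C_neq0 _ Hz) as Hn.
  assert (Hd : continuity_2d_pt (fun a b => / (fst (F a b) ^ 2 + snd (F a b) ^ 2)) x y).
  { apply (continuity_1d_2d_pt_comp Rinv (fun a b => fst (F a b) ^ 2 + snd (F a b) ^ 2)).
    apply cont_Rinv; auto.
    apply continuity_2d_pt_plus; simpl;
    repeat (apply continuity_2d_pt_mult; auto); apply continuity_2d_pt_const. }
  split; unfold Cinv; simpl.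
  - apply (continuity_2d_pt_mult (fun a b => fst (F a b))); auto.
  - apply (continuity_2d_pt_mult (fun a b => - snd (F a b))); auto. apply continuity_2d_pt_opp; auto.
Qed.

Lemma cont2_exp F x y : cont2 F x y -> cont2 (fun a b => Cexpo (F a b)) x y.
Proof.
  intros [H1 H2]. unfold Cexpo, Re, Im. split; simpl; apply continuity_2d_pt_mult.
  - apply (continuity_1d_2d_pt_comp exp); auto. apply derivable_continuous_pt, derivable_pt_exp.
  - apply (continuity_1d_2d_pt_comp cos); auto. apply continuity_cos.
  - apply (continuity_1d_2d_pt_comp exp); auto. apply derivable_continuous_pt, derivable_pt_exp.
  - apply (continuity_1d_2d_pt_comp sin); auto. apply continuity_sin.
Qed.

Definition eC (th : R) : C := (cos th, sin th).

Lemma cont2_cos x y : continuity_2d_pt (fun a b => cos b) x y.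
Proof. apply (continuity_1d_2d_pt_comp cos (fun a b => b)). apply continuity_cos. apply continuity_2d_pt_id2. Qed.
Lemma cont2_sin x y : continuity_2d_pt (fun a b => sin b) x y.
Proof. apply (continuity_1d_2d_pt_comp sin (fun a b => b)). apply continuity_sin. apply continuity_2d_pt_id2. Qed.

Lemma cont2_eC x y : cont2 (fun a b => eC b) x y.
Proof. split; simpl. apply cont2_cos. apply cont2_sin. Qed.

Lemma cont2_circ x y : cont2 (fun a b => circ a b) x y.
Proof.
  split; simpl. apply continuity_2d_pt_plus. apply continuity_2d_pt_const.
  apply continuity_2d_pt_mult. apply continuity_2d_pt_id1. apply cont2_cos.
  apply continuity_2d_pt_mult. apply continuity_2d_pt_id1. apply cont2_sin.
Qed.

Lemma cont2_jac x y : cont2 (fun a b => circ_jac a b) x y.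
Proof.
  split; simpl.
  apply continuity_2d_pt_mult. apply continuity_2d_pt_id1. apply cont2_cos.
  apply continuity_2d_pt_mult. apply continuity_2d_pt_id1. apply cont2_sin.
Qed.

Lemma cont2_continuous F x y : cont2 F x y ->
  continuous (U:=C_R_CompleteNormedModule) (fun b => F x b) y.
Proof.
  intros [H1 H2]. apply filterlim_locally. intros eps.
  destruct (H1 eps) as [d1 P1]. destruct (H2 eps) as [d2 P2].
  assert (Hd : 0 < Rmin d1 d2) by (apply Rmin_pos; apply cond_pos).
  exists (mkposreal _ Hd). intros b Hb. simpl in Hb. unfold ball in Hb; simpl in Hb.
  unfold AbsRing_ball, abs, minus, plus, opp in Hb; simpl in Hb.
  split; unfold ball; simpl; unfold AbsRing_ball, abs, minus, plus, opp; simpl.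
  - apply P1. rewrite Rminus_eq_0, Rabs_R0; apply cond_pos.
    eapply Rlt_le_trans. exact Hb. apply Rmin_l.
  - apply P2. rewrite Rminus_eq_0, Rabs_R0; apply cond_pos.
    eapply Rlt_le_trans. exact Hb. apply Rmin_r.
Qed.

(* holomorphy in polar coordinates on the region |z - 1/2| > rh *)
Definition PH (rh : R) (f f' : C -> C) : Prop :=
  forall r th, rh < r ->
    isdC (fun s => f (circ s th)) r (Cmult (eC th) (f' (circ r th))) /\
    isdC (fun s => f (circ r s)) th (Cmult (Cmult (0, r) (eC th)) (f' (circ r th))) /\
    cont2 (fun a b => f (circ a b)) r th /\ cont2 (fun a b => f' (circ a b)) r th.

Definition PHol rh f := exists f', PH rh f f'.

Lemma PH_const rh c : PH rh (fun _ => c) (fun _ => RtoC 0).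
Proof.
  intros r th _. split; [|split; [|split]].
  - apply isdC_eq with (RtoC 0). apply (isdC_const c). ring.
  - apply isdC_eq with (RtoC 0). apply (isdC_const c). ring.
  - apply cont2_const.
  - apply cont2_const.
Qed.

Lemma PH_id rh : PH rh (fun z => z) (fun _ => RtoC 1).
Proof.
  intros r th _. split; [|split; [|split]].
  - apply is_derive_C; simpl.
    + auto_derive; try easy; ring.
    + auto_derive; try easy; ring.
  - apply is_derive_C; simpl.
    + auto_derive; try easy; ring.
    + auto_derive; try easy; ring.
  - apply cont2_circ.
  - apply cont2_const.
Qed.

Lemma PH_plus rh f f' g g' : PH rh f f' -> PH rh g g' ->
  PH rh (fun z => Cplus (f z) (g z)) (fun z => Cplus (f' z) (g' z)).
Proof.
  intros Hf Hg r th Hr. destruct (Hf r th Hr) as (A1 & A2 & A3 & A4).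
  destruct (Hg r th Hr) as (B1 & B2 & B3 & B4).
  split; [|split; [|split]].
  - eapply isdC_eq. apply (isdC_plus (fun s => f (circ s th)) (fun s => g (circ s th))); eauto. ring.
  - eapply isdC_eq. apply (isdC_plus (fun s => f (circ r s)) (fun s => g (circ r s))); eauto. ring.
  - apply (cont2_plus (fun a b => f (circ a b)) (fun a b => g (circ a b))); auto.
  - apply (cont2_plus (fun a b => f' (circ a b)) (fun a b => g' (circ a b))); auto.
Qed.

Lemma PH_mult rh f f' g g' : PH rh f f' -> PH rh g g' ->
  PH rh (fun z => Cmult (f z) (g z)) (fun z => Cplus (Cmult (f' z) (g z)) (Cmult (f z) (g' z))).
Proof.
  intros Hf Hg r th Hr. destruct (Hf r th Hr) as (A1 & A2 & A3 & A4).
  destruct (Hg r th Hr) as (B1 & B2 & B3 & B4).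
  split; [|split; [|split]].
  - eapply isdC_eq. apply (isdC_mult (fun s => f (circ s th)) (fun s => g (circ s th))); eauto. ring.
  - eapply isdC_eq. apply (isdC_mult (fun s => f (circ r s)) (fun s => g (circ r s))); eauto. ring.
  - apply (cont2_mult (fun a b => f (circ a b)) (fun a b => g (circ a b))); auto.
  - apply (cont2_plus (fun a b => Cmult (f' (circ a b)) (g (circ a b))) (fun a b => Cmult (f (circ a b)) (g' (circ a b)))).
    apply (cont2_mult (fun a b => f' (circ a b)) (fun a b => g (circ a b))); auto.
    apply (cont2_mult (fun a b => f (circ a b)) (fun a b => g' (circ a b))); auto.
Qed.

Lemma PH_inv rh f f' : PH rh f f' -> (forall r th, rh < r -> f (circ r th) <> RtoC 0) ->
  PH rh (fun z => Cinv (f z)) (fun z => Copp (Cdiv (f' z) (Cmult (f z) (f z)))).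
Proof.
  intros Hf Hnz r th Hr. destruct (Hf r th Hr) as (A1 & A2 & A3 & A4).
  pose proof (Hnz r th Hr) as Hz.
  split; [|split; [|split]].
  - eapply isdC_eq. apply (isdC_inv (fun s => f (circ s th))); eauto. unfold Cdiv. ring.
  - eapply isdC_eq. apply (isdC_inv (fun s => f (circ r s))); eauto. unfold Cdiv. ring.
  - apply (cont2_inv (fun a b => f (circ a b))); auto.
  - apply (cont2_opp (fun a b => Cdiv (f' (circ a b)) (Cmult (f (circ a b)) (f (circ a b))))).
    unfold Cdiv.
    apply (cont2_mult (fun a b => f' (circ a b)) (fun a b => Cinv (Cmult (f (circ a b)) (f (circ a b))))); auto.
    apply (cont2_inv (fun a b => Cmult (f (circ a b)) (f (circ a b)))).
    apply (cont2_mult (fun a b => f (circ a b)) (fun a b => f (circ a b))); auto.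
    apply Cmult_neq_0; auto.
Qed.

Lemma PH_exp rh f f' : PH rh f f' ->
  PH rh (fun z => Cexpo (f z)) (fun z => Cmult (Cexpo (f z)) (f' z)).
Proof.
  intros Hf r th Hr. destruct (Hf r th Hr) as (A1 & A2 & A3 & A4).
  split; [|split; [|split]].
  - eapply isdC_eq. apply (isdC_exp (fun s => f (circ s th))); eauto. ring.
  - eapply isdC_eq. apply (isdC_exp (fun s => f (circ r s))); eauto. ring.
  - apply (cont2_exp (fun a b => f (circ a b))); auto.
  - apply (cont2_mult (fun a b => Cexpo (f (circ a b))) (fun a b => f' (circ a b))); auto.
    apply (cont2_exp (fun a b => f (circ a b))); auto.
Qed.


Lemma PHol_ext rh f g : (forall z, f z = g z) -> PHol rh f -> PHol rh g.
Proof. intros H Hf. replace g with f; auto. apply functional_extensionality; auto. Qed.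

Lemma PHol_const rh c : PHol rh (fun _ => c).
Proof. eexists; apply PH_const. Qed.
Lemma PHol_id rh : PHol rh (fun z => z).
Proof. eexists; apply PH_id. Qed.
Lemma PHol_plus rh f g : PHol rh f -> PHol rh g -> PHol rh (fun z => Cplus (f z) (g z)).
Proof. intros [f' Hf] [g' Hg]. eexists; apply PH_plus; eauto. Qed.
Lemma PHol_mult rh f g : PHol rh f -> PHol rh g -> PHol rh (fun z => Cmult (f z) (g z)).
Proof. intros [f' Hf] [g' Hg]. eexists; apply PH_mult; eauto. Qed.
Lemma PHol_inv rh f : PHol rh f -> (forall r th, rh < r -> f (circ r th) <> RtoC 0) ->
  PHol rh (fun z => Cinv (f z)).
Proof. intros [f' Hf] Hn. eexists; apply PH_inv; eauto. Qed.
Lemma PHol_exp rh f : PHol rh f -> PHol rh (fun z => Cexpo (f z)).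
Proof. intros [f' Hf]. eexists; apply PH_exp; eauto. Qed.

Lemma PHol_minus rh f (c : C) : PHol rh f -> PHol rh (fun z => Cminus (f z) c).
Proof.
  intros H. apply PHol_ext with (fun z => Cplus (f z) (Copp c)). intros; reflexivity.
  apply PHol_plus; auto. apply PHol_const.
Qed.

Lemma PHol_div rh f g : PHol rh f -> PHol rh g -> (forall r th, rh < r -> g (circ r th) <> RtoC 0) ->
  PHol rh (fun z => Cdiv (f z) (g z)).
Proof.
  intros Hf Hg Hn. apply PHol_ext with (fun z => Cmult (f z) (Cinv (g z))). intros; reflexivity.
  apply PHol_mult; auto. apply PHol_inv; auto.
Qed.

Lemma PHol_Cpow rh f n : PHol rh f -> PHol rh (fun z => Cpow (f z) n).
Proof.
  intros H. induction n as [|n IH]; simpl.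
  - apply PHol_const.
  - apply PHol_mult; auto.
Qed.

Lemma PHol_Czpow rh f n : PHol rh f -> (forall r th, rh < r -> f (circ r th) <> RtoC 0) ->
  PHol rh (fun z => Czpow (f z) n).
Proof.
  intros H Hn. destruct n as [|p|p]; simpl.
  - apply PHol_const.
  - apply PHol_Cpow; auto.
  - apply PHol_inv. apply PHol_Cpow; auto.
    intros r th Hr. apply Cpow_nz. auto.
Qed.

Lemma Cmod_circ_sub r th : 0 <= r -> Cmod (Cminus (circ r th) (RtoC (1/2))) = r.
Proof.
  intros Hr. unfold Cmod, circ, Cminus; simpl.
  assert (H1 : sin th ^ 2 + cos th ^ 2 = 1) by (rewrite <- (sin2_cos2 th); unfold Rsqr; ring).
  replace ((1 / 2 + r * cos th + - (1 / 2)) * ((1 / 2 + r * cos th + - (1 / 2)) * 1) +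
    (r * sin th + - 0) * ((r * sin th + - 0) * 1)) with (r * r)
   by (transitivity (r * r * (sin th ^ 2 + cos th ^ 2)); [rewrite H1; ring | ring]).
  apply sqrt_square; auto.
Qed.

Lemma circ_ne (a : C) r th : 0 <= r -> Cmod (Cminus a (RtoC (1/2))) < r -> circ r th <> a.
Proof.
  intros H0 H E. subst a. rewrite Cmod_circ_sub in H; auto. lra.
Qed.

Lemma rho_ge_half alpha : 1/2 <= rho alpha.
Proof. unfold rho. apply Rmax_l. Qed.

Lemma rho_ge_alpha alpha : Rabs (alpha - 1/2) <= rho alpha.
Proof. unfold rho. apply Rmax_r. Qed.

Lemma Cmod_real_sub a : Cmod (Cminus (RtoC a) (RtoC (1/2))) = Rabs (a - 1/2).
Proof.
  unfold Cmod, Cminus; simpl. rewrite <- sqrt_Rsqr_abs. unfold Rsqr. f_equal. ring.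
Qed.

Lemma circ_ne_real alpha a r th : Rabs (a - 1/2) <= rho alpha -> rho alpha < r ->
  circ r th <> RtoC a.
Proof.
  intros H1 H2. apply circ_ne. pose proof (rho_ge_half alpha); lra.
  rewrite Cmod_real_sub. lra.
Qed.

Lemma circ_minus_ne alpha a r th : Rabs (a - 1/2) <= rho alpha -> rho alpha < r ->
  Cminus (circ r th) (RtoC a) <> RtoC 0.
Proof.
  intros H1 H2 E. apply (circ_ne_real alpha a r th H1 H2).
  apply (f_equal (fun z => Cplus z (RtoC a))) in E.
  replace (Cplus (Cminus (circ r th) (RtoC a)) (RtoC a)) with (circ r th) in E by ring.
  rewrite E. ring.
Qed.

Lemma abs_0_half alpha : Rabs (0 - 1/2) <= rho alpha.
Proof. pose proof (rho_ge_half alpha). rewrite Rabs_left; lra. Qed.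
Lemma abs_1_half alpha : Rabs (1 - 1/2) <= rho alpha.
Proof. pose proof (rho_ge_half alpha). rewrite Rabs_right; lra. Qed.
Lemma abs_half_half alpha : Rabs (1/2 - 1/2) <= rho alpha.
Proof. pose proof (rho_ge_half alpha). replace (1/2-1/2) with 0 by ring. rewrite Rabs_R0; lra. Qed.

Lemma Cinv_nz (z : C) : z <> RtoC 0 -> Cinv z <> RtoC 0.
Proof.
  intros H E. assert (H1 := Cinv_l z H). rewrite E in H1.
  rewrite Cmult_0_l in H1. injection H1. lra.
Qed.

Lemma Czpow_nz (z : C) n : z <> RtoC 0 -> Czpow z n <> RtoC 0.
Proof.
  intros H. destruct n as [|p|p]; simpl.
  - intro E; injection E; lra.
  - apply Cpow_nz; auto.
  - apply Cinv_nz, Cpow_nz; auto.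
Qed.

Lemma PHol_Gfac alpha t k x : PHol (rho alpha) (Gfac alpha t k x).
Proof.
  unfold Gfac. apply PHol_div.
  - apply PHol_mult.
    + apply PHol_Czpow. apply PHol_id.
      intros r th Hr E. apply (circ_ne_real alpha 0 r th (abs_0_half alpha) Hr). exact E.
    + apply PHol_exp. apply PHol_mult. apply PHol_const. apply PHol_minus. apply PHol_id.
  - apply PHol_mult. apply PHol_minus, PHol_id.
    apply PHol_Czpow. apply PHol_minus, PHol_id.
    intros r th Hr. apply (circ_minus_ne alpha). apply abs_1_half. auto.
  - intros r th Hr. apply Cmult_neq_0.
    apply (circ_minus_ne alpha). apply rho_ge_alpha. auto.
    destruct k as [|p|p]; simpl.
    + intro E. injection E; lra.
    + apply Cpow_nz. apply (circ_minus_ne alpha). apply abs_1_half. auto.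
    + apply Cinv_nz. apply Cpow_nz. apply (circ_minus_ne alpha). apply abs_1_half. auto.
Qed.


Lemma is_RInt_Cmult (f : R -> C) a b (l c : C) :
  is_RInt (V:=C_R_NormedModule) f a b l ->
  is_RInt (V:=C_R_NormedModule) (fun t => Cmult c (f t)) a b (Cmult c l).
Proof.
  intros H. destruct c as [c1 c2]. destruct l as [l1 l2].
  apply is_RInt_ext with (fun t => (c1 * fst (f t) - c2 * snd (f t), c1 * snd (f t) + c2 * fst (f t))).
  { intros t _. destruct (f t); reflexivity. }
  change (Cmult (c1, c2) (l1, l2)) with (c1 * l1 - c2 * l2, c1 * l2 + c2 * l1).
  assert (H1 := is_RInt_fct_extend_fst (U:=R_NormedModule) (V:=R_NormedModule) f a b (l1, l2) H).
  assert (H2 := is_RInt_fct_extend_snd (U:=R_NormedModule) (V:=R_NormedModule) f a b (l1, l2) H).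
  simpl in H1, H2.
  apply (is_RInt_fct_extend_pair (U:=R_NormedModule) (V:=R_NormedModule)); simpl.
  - apply (is_RInt_minus (V:=R_NormedModule) (fun t => c1 * fst (f t)) (fun t => c2 * snd (f t))).
    apply (is_RInt_scal (V:=R_NormedModule) (fun t => fst (f t))); auto.
    apply (is_RInt_scal (V:=R_NormedModule) (fun t => snd (f t))); auto.
  - apply (is_RInt_plus (V:=R_NormedModule) (fun t => c1 * snd (f t)) (fun t => c2 * fst (f t))).
    apply (is_RInt_scal (V:=R_NormedModule) (fun t => snd (f t))); auto.
    apply (is_RInt_scal (V:=R_NormedModule) (fun t => fst (f t))); auto.
Qed.

Lemma RInt_C_split (f : R -> C) a b :
  ex_RInt (V:=C_R_CompleteNormedModule) f a b ->
  RInt (V:=C_R_CompleteNormedModule) f a b = (RInt (fun t => fst (f t)) a b, RInt (fun t => snd (f t)) a b).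
Proof.
  intros H. apply RInt_correct in H.
  assert (H1 := is_RInt_fct_extend_fst (U:=R_NormedModule) (V:=R_NormedModule) f a b _ H).
  assert (H2 := is_RInt_fct_extend_snd (U:=R_NormedModule) (V:=R_NormedModule) f a b _ H).
  assert (E1 : RInt (fun t => fst (f t)) a b = fst (RInt (V:=C_R_CompleteNormedModule) f a b)) by (apply is_RInt_unique; exact H1).
  assert (E2 : RInt (fun t => snd (f t)) a b = snd (RInt (V:=C_R_CompleteNormedModule) f a b)) by (apply is_RInt_unique; exact H2).
  rewrite E1, E2. destruct (RInt (V:=C_R_CompleteNormedModule) f a b); reflexivity.
Qed.

Lemma locally_gt rh r : rh < r -> locally r (fun y : R => rh < y).
Proof.
  intros H. assert (Hp : 0 < r - rh) by lra. exists (mkposreal _ Hp).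
  intros y Hy. unfold ball in Hy; simpl in Hy; unfold AbsRing_ball, abs, minus, plus, opp in Hy; simpl in Hy.
  apply Rabs_lt_between in Hy. lra.
Qed.

Lemma locally_2d_gt rh r t : rh < r -> locally_2d (fun u v => rh < u) r t.
Proof.
  intros H. assert (Hp : 0 < r - rh) by lra. exists (mkposreal _ Hp).
  intros u v Hu _. simpl in Hu. apply Rabs_lt_between in Hu. lra.
Qed.

Lemma C_ext (a b : C) : fst a = fst b -> snd a = snd b -> a = b.
Proof. destruct a, b; simpl; intros; subst; reflexivity. Qed.

Lemma jac_eC r th : circ_jac r th = Cmult (RtoC r) (eC th).
Proof. unfold circ_jac, eC, Cmult; simpl. f_equal; ring. Qed.

Lemma circ_2PI r : circ r (2 * PI) = circ r 0.
Proof. unfold circ. rewrite cos_2PI, sin_2PI, cos_0, sin_0. reflexivity. Qed.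
Lemma eC_2PI : eC (2 * PI) = eC 0.
Proof. unfold eC. rewrite cos_2PI, sin_2PI, cos_0, sin_0. reflexivity. Qed.

Lemma isdC_jac_r r th : isdC (fun s => circ_jac s th) r (eC th).
Proof. apply is_derive_C; simpl; auto_derive; try easy; ring. Qed.

Lemma isdC_eC th : isdC (fun s => eC s) th (Cmult (0,1) (eC th)).
Proof. apply is_derive_C; simpl; auto_derive; try easy; ring. Qed.

Section ANN.
Variables (rh : R) (f f' : C -> C).
Hypothesis Hf : PH rh f f'.

Let F r th := Cmult (f (circ r th)) (circ_jac r th).
Let Dr r th := Cplus (Cmult (Cmult (eC th) (f' (circ r th))) (circ_jac r th)) (Cmult (f (circ r th)) (eC th)).

Lemma ANN_derF r th : rh < r -> isdC (fun s => F s th) r (Dr r th).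
Proof.
  intros Hr. destruct (Hf r th Hr) as (A1 & A2 & A3 & A4).
  unfold F, Dr. apply (isdC_mult (fun s => f (circ s th)) (fun s => circ_jac s th)); auto.
  apply isdC_jac_r.
Qed.

Lemma ANN_contF r th : rh < r -> cont2 F r th.
Proof.
  intros Hr. destruct (Hf r th Hr) as (A1 & A2 & A3 & A4).
  apply (cont2_mult (fun a b => f (circ a b)) (fun a b => circ_jac a b)); auto. apply cont2_jac.
Qed.

Lemma ANN_contD r th : rh < r -> cont2 Dr r th.
Proof.
  intros Hr. destruct (Hf r th Hr) as (A1 & A2 & A3 & A4).
  unfold Dr. apply (cont2_plus (fun a b => Cmult (Cmult (eC b) (f' (circ a b))) (circ_jac a b))
                   (fun a b => Cmult (f (circ a b)) (eC b))).
  - apply (cont2_mult (fun a b => Cmult (eC b) (f' (circ a b))) (fun a b => circ_jac a b)).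
    apply (cont2_mult (fun a b => eC b) (fun a b => f' (circ a b))); auto. apply cont2_eC.
    apply cont2_jac.
  - apply (cont2_mult (fun a b => f (circ a b)) (fun a b => eC b)); auto. apply cont2_eC.
Qed.

Lemma ANN_intD r : rh < r -> is_RInt (V:=C_R_NormedModule) (Dr r) 0 (2 * PI) (RtoC 0).
Proof.
  intros Hr.
  set (E th := Cmult (f (circ r th)) (eC th)).
  set (E' th := Cplus (Cmult (Cmult (Cmult (0, r) (eC th)) (f' (circ r th))) (eC th))
                      (Cmult (f (circ r th)) (Cmult (0,1) (eC th)))).
  assert (HE : forall th, isdC E th (E' th)).
  { intros th. destruct (Hf r th Hr) as (A1 & A2 & A3 & A4).
    apply (isdC_mult (fun s => f (circ r s)) (fun s => eC s)); auto. apply isdC_eC. }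
  assert (HcE : forall th, continuous (U:=C_R_CompleteNormedModule) E' th).
  { intros th. destruct (Hf r th Hr) as (A1 & A2 & A3 & A4).
    apply (cont2_continuous (fun a b => Cplus (Cmult (Cmult (Cmult (0, a) (eC b)) (f' (circ a b))) (eC b))
                      (Cmult (f (circ a b)) (Cmult (0,1) (eC b))))).
    apply cont2_plus. apply cont2_mult. apply cont2_mult. apply cont2_mult.
    split; simpl. apply continuity_2d_pt_const. apply continuity_2d_pt_id1.
    apply cont2_eC. auto. apply cont2_eC.
    apply cont2_mult. auto. apply cont2_mult. apply cont2_const. apply cont2_eC. }
  assert (HI : is_RInt (V:=C_R_CompleteNormedModule) E' 0 (2 * PI) (RtoC 0)).
  { replace (RtoC 0) with (minus (E (2 * PI)) (E 0)).
    apply (is_RInt_derive (V:=C_R_CompleteNormedModule) E E'). intros; apply HE. intros; apply HcE.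
    unfold E. rewrite circ_2PI, eC_2PI. destruct (Cmult (f (circ r 0)) (eC 0)) as [a b]. compute. f_equal; ring. }
  assert (Hpt : forall th, @eq C (Cmult (0,-1) (E' th)) (Dr r th)).
  { intros th. unfold Dr, E'. rewrite jac_eC.
    replace (0, r) with (Cmult (0,1) (RtoC r)) by (apply C_ext; simpl; ring).
    replace (0, -1) with (Copp (0,1)) by (apply C_ext; simpl; ring).
    assert (Hi : Cmult (0,1) (0,1) = Copp (RtoC 1)) by (apply C_ext; simpl; ring).
    transitivity (Cmult (Cmult (Copp (Cmult (0, 1) (0,1))) (eC th)) (Cplus (Cmult (Cmult (eC th) (f' (circ r th))) (RtoC r)) (f (circ r th)))).
    ring. rewrite Hi. ring. }
  apply is_RInt_ext with (fun th => Cmult (0,-1) (E' th)).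
  { intros th _. apply Hpt. }
  replace (RtoC 0) with (Cmult (0,-1) (RtoC 0)) by ring.
  apply is_RInt_Cmult. exact HI.
Qed.

Lemma ANN_exRInt r : rh < r -> ex_RInt (V:=C_R_CompleteNormedModule) (F r) 0 (2 * PI).
Proof.
  intros Hr. apply ex_RInt_continuous. intros t _.
  apply (cont2_continuous F). apply ANN_contF; auto.
Qed.

Lemma ANN_deriv r : rh < r ->
  is_derive (K:=R_AbsRing) (V:=C_R_NormedModule) (fun y => RInt (V:=C_R_CompleteNormedModule) (F y) 0 (2 * PI)) r zero.
Proof.
  intros Hr.
  apply is_derive_ext_loc with (fun y => (RInt (fun t => fst (F y t)) 0 (2 * PI), RInt (fun t => snd (F y t)) 0 (2 * PI))).
  { apply filter_imp with (2 := locally_gt rh r Hr). intros y Hy.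
    rewrite RInt_C_split; auto. apply ANN_exRInt; auto. }
  assert (HD := ANN_intD r Hr).
  assert (H1 := is_RInt_fct_extend_fst (U:=R_NormedModule) (V:=R_NormedModule) _ _ _ _ HD).
  assert (H2 := is_RInt_fct_extend_snd (U:=R_NormedModule) (V:=R_NormedModule) _ _ _ _ HD).
  simpl in H1, H2.
  apply is_derive_C; simpl.
  - eapply isd_eq.
    apply (is_derive_RInt_param (fun u t => fst (F u t))).
    + apply filter_imp with (2 := locally_gt rh r Hr). intros y Hy t _.
      eexists. apply isdC_fst. apply ANN_derF; auto.
    + intros t _. apply continuity_2d_pt_ext_loc with (fun u v => fst (Dr u v)).
      * destruct (locally_2d_gt rh r t Hr) as [d Hd]. exists d. intros u v Hu Hv.
        symmetry. apply is_derive_unique. apply isdC_fst. apply ANN_derF. apply (Hd u v Hu Hv).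
      * apply (ANN_contD r t Hr).
    + apply filter_imp with (2 := locally_gt rh r Hr). intros y Hy.
      apply (ex_RInt_fct_extend_fst (U:=R_NormedModule) (V:=R_NormedModule)). apply ANN_exRInt; auto.
    + rewrite RInt_ext with (g := fun t => fst (Dr r t)).
      apply is_RInt_unique. exact H1.
      intros t _. apply is_derive_unique. apply isdC_fst. apply ANN_derF; auto.
  - eapply isd_eq.
    apply (is_derive_RInt_param (fun u t => snd (F u t))).
    + apply filter_imp with (2 := locally_gt rh r Hr). intros y Hy t _.
      eexists. apply isdC_snd. apply ANN_derF; auto.
    + intros t _. apply continuity_2d_pt_ext_loc with (fun u v => snd (Dr u v)).
      * destruct (locally_2d_gt rh r t Hr) as [d Hd]. exists d. intros u v Hu Hv.
        symmetry. apply is_derive_unique. apply isdC_snd. apply ANN_derF. apply (Hd u v Hu Hv).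
      * apply (ANN_contD r t Hr).
    + apply filter_imp with (2 := locally_gt rh r Hr). intros y Hy.
      apply (ex_RInt_fct_extend_snd (U:=R_NormedModule) (V:=R_NormedModule)). apply ANN_exRInt; auto.
    + rewrite RInt_ext with (g := fun t => snd (Dr r t)).
      apply is_RInt_unique. exact H2.
      intros t _. apply is_derive_unique. apply isdC_snd. apply ANN_derF; auto.
Qed.

Lemma ANN r1 r2 : rh < r1 -> rh < r2 ->
  RInt (V:=C_R_CompleteNormedModule) (F r1) 0 (2 * PI) = RInt (V:=C_R_CompleteNormedModule) (F r2) 0 (2 * PI).
Proof.
  intros H1 H2.
  assert (K : forall a b, rh < a -> a < b -> RInt (V:=C_R_CompleteNormedModule) (F a) 0 (2 * PI) = RInt (V:=C_R_CompleteNormedModule) (F b) 0 (2 * PI)).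
  { intros a b Ha Hab.
    apply (eq_is_derive (V:=C_R_NormedModule) (fun y => RInt (V:=C_R_CompleteNormedModule) (F y) 0 (2 * PI))); auto.
    intros t Ht. apply ANN_deriv. lra. }
  destruct (Rtotal_order r1 r2) as [H|[H|H]].
  - apply K; auto.
  - subst; reflexivity.
  - symmetry; apply K; auto.
Qed.

End ANN.

Lemma ANN_main rh f r1 r2 : PHol rh f -> rh < r1 -> rh < r2 ->
  RInt (V:=C_R_CompleteNormedModule) (fun th => Cmult (f (circ r1 th)) (circ_jac r1 th)) 0 (2 * PI) =
  RInt (V:=C_R_CompleteNormedModule) (fun th => Cmult (f (circ r2 th)) (circ_jac r2 th)) 0 (2 * PI).
Proof.
  intros [f' Hf] H1 H2. apply (ANN rh f f' Hf r1 r2 H1 H2).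
Qed.

Lemma PHol_exRInt rh f r : PHol rh f -> rh < r ->
  ex_RInt (V:=C_R_CompleteNormedModule) (fun th => Cmult (f (circ r th)) (circ_jac r th)) 0 (2 * PI).
Proof.
  intros [f' Hf] H. apply (ANN_exRInt rh f f' Hf r H).
Qed.

Lemma PHol_cont rh f r th : PHol rh f -> rh < r ->
  continuous (U:=C_R_CompleteNormedModule) (fun b => f (circ r b)) th.
Proof.
  intros [f' Hf] H. destruct (Hf r th H) as (A1 & A2 & A3 & A4).
  apply (cont2_continuous (fun a b => f (circ a b))). auto.
Qed.


Lemma abs_fst_le (z : C) : Rabs (fst z) <= Cmod z.
Proof. apply re_le_Cmod. Qed.
Lemma abs_snd_le (z : C) : Rabs (snd z) <= Cmod z.
Proof.
  unfold Cmod. rewrite <- sqrt_Rsqr_abs. apply sqrt_le_1_alt. unfold Rsqr.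
  destruct z; simpl. nra.
Qed.

Lemma ball_C (x y : C) (eps : R) : Cmod (Cminus y x) < eps ->
  ball (M:=C_R_CompleteNormedModule) x eps y.
Proof.
  intros H. destruct x as [a b], y as [c d]. split; unfold ball; simpl;
  unfold AbsRing_ball, abs, minus, plus, opp; simpl.
  - eapply Rle_lt_trans; [|exact H]. apply (abs_fst_le (Cminus (c,d) (a,b))).
  - eapply Rle_lt_trans; [|exact H]. apply (abs_snd_le (Cminus (c,d) (a,b))).
Qed.

Definition cl a b x := Rmax a (Rmin b x).
Lemma cl_in a b x : a <= b -> a <= cl a b x <= b.
Proof. intros H. unfold cl. split. apply Rmax_l. apply Rmax_lub; auto. apply Rmin_l. Qed.
Lemma cl_id a b x : a <= x <= b -> cl a b x = x.
Proof. intros H. unfold cl. rewrite Rmin_right by lra. rewrite Rmax_right by lra. auto. Qed.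

Lemma is_RInt_cl (f : R -> C) a b l : a <= b ->
  is_RInt (V:=C_R_CompleteNormedModule) f a b l <->
  is_RInt (V:=C_R_CompleteNormedModule) (fun x => f (cl a b x)) a b l.
Proof.
  intros H. split; intros H1.
  - apply is_RInt_ext with f; auto. intros x Hx.
    rewrite Rmin_left in Hx by lra; rewrite Rmax_right in Hx by lra.
    rewrite cl_id; auto; lra.
  - apply is_RInt_ext with (fun x => f (cl a b x)); auto. intros x Hx.
    rewrite Rmin_left in Hx by lra; rewrite Rmax_right in Hx by lra.
    rewrite cl_id; auto; lra.
Qed.

Lemma norm_minus_C (x y : C) : norm (K:=R_AbsRing) (V:=C_R_NormedModule) (minus x y) = Cmod (Cminus x y).
Proof. rewrite norm_C. reflexivity. Qed.

Lemma DI_lim (FN : nat -> R -> R -> C) (F : R -> R -> C) (GN : nat -> R -> C) (SN : nat -> C)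
  (eps : nat -> R) a b :
  a <= b ->
  (forall N th, a <= th <= b -> is_RInt (V:=C_R_CompleteNormedModule) (FN N th) a b (GN N th)) ->
  (forall N, is_RInt (V:=C_R_CompleteNormedModule) (GN N) a b (SN N)) ->
  (forall N th ph, a <= th <= b -> a <= ph <= b -> Cmod (Cminus (FN N th ph) (F th ph)) <= eps N) ->
  (forall e : posreal, eventually (fun N => eps N < e)) ->
  exists L : C,
    filterlim SN eventually (locally (T:=C_R_CompleteNormedModule) L) /\
    (forall th, a <= th <= b -> ex_RInt (V:=C_R_CompleteNormedModule) (F th) a b) /\
    is_RInt (V:=C_R_CompleteNormedModule) (fun th => RInt (V:=C_R_CompleteNormedModule) (F th) a b) a b L.
Proof.
  intros Hab HF HG Hb He.
  assert (Inner : forall th, a <= th <= b -> exists If : C,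
     filterlim (fun N => GN N th) eventually (locally (T:=C_R_CompleteNormedModule) If) /\
     is_RInt (V:=C_R_CompleteNormedModule) (F th) a b If).
  { intros th Hth.
    destruct (filterlim_RInt (V:=C_R_CompleteNormedModule) (fun N x => FN N th (cl a b x)) a b eventually eventually_filter
               (fun x => F th (cl a b x)) (fun N => GN N th)) as [If [H1 H2]].
    - intros N. apply (proj1 (is_RInt_cl (FN N th) a b (GN N th) Hab)). apply HF; auto.
    - apply filterlim_locally. intros e. destruct (He e) as [N0 HN0]. exists N0. intros N HN.
      intros t. apply ball_C. specialize (Hb N th (cl a b t) Hth (cl_in a b t Hab)).
      specialize (HN0 N HN). 
      lra.
    - exists If. split; auto. apply (proj2 (is_RInt_cl (F th) a b If Hab)); auto. }
  assert (Hex : forall th, a <= th <= b -> ex_RInt (V:=C_R_CompleteNormedModule) (F th) a b).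
  { intros th Hth. destruct (Inner th Hth) as [If [_ H]]. exists If; auto. }
  assert (Unif : forall N th, a <= th <= b ->
     Cmod (Cminus (GN N th) (RInt (V:=C_R_CompleteNormedModule) (F th) a b)) <= (b - a) * eps N).
  { intros N th Hth.
    assert (HI : is_RInt (V:=C_R_NormedModule) (fun x => Cminus (FN N th x) (F th x)) a b
                   (Cminus (GN N th) (RInt (V:=C_R_CompleteNormedModule) (F th) a b))).
    { apply (is_RInt_minus (V:=C_R_NormedModule)). apply HF; auto. exact (RInt_correct (V:=C_R_CompleteNormedModule) _ _ _ (Hex th Hth)). }
    pose proof (norm_RInt_le_const (V:=C_R_NormedModule) (fun x => Cminus (FN N th x) (F th x)) a b
       (Cminus (GN N th) (RInt (V:=C_R_CompleteNormedModule) (F th) a b)) (eps N) Hab) as H.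
    rewrite norm_C in H. apply H; [|exact HI].
    intros x Hx. rewrite norm_C. apply Hb; auto. }
  destruct (filterlim_RInt (V:=C_R_CompleteNormedModule) (fun N x => GN N (cl a b x)) a b eventually eventually_filter
             (fun x => RInt (V:=C_R_CompleteNormedModule) (F (cl a b x)) a b) SN) as [L [H1 H2]].
  - intros N. apply (proj1 (is_RInt_cl (GN N) a b (SN N) Hab)); auto.
  - apply filterlim_locally. intros e.
    assert (Hbp : 0 < b - a + 1) by lra.
    assert (Hep : 0 < e / (b - a + 1)) by (apply Rdiv_lt_0_compat; [apply cond_pos|lra]).
    destruct (He (mkposreal _ Hep)) as [N0 HN0]. exists N0. intros N HN t. apply ball_C.
    specialize (Unif N (cl a b t) (cl_in a b t Hab)). specialize (HN0 N HN). simpl in HN0.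
    eapply Rle_lt_trans. exact Unif.
    assert (0 <= eps N).
    { eapply Rle_trans; [apply Cmod_ge_0|]. apply (Hb N a a); lra. }
    apply Rle_lt_trans with ((b - a + 1) * eps N). nra.
    apply Rmult_lt_reg_l with (/ (b - a + 1)). apply Rinv_0_lt_compat; lra.
    rewrite <- Rmult_assoc, Rinv_l, Rmult_1_l by lra. unfold Rdiv in HN0. lra.
  - exists L. split; auto. split; auto.
    apply (proj2 (is_RInt_cl (fun th => RInt (V:=C_R_CompleteNormedModule) (F th) a b) a b L Hab)); auto.
Qed.


Fixpoint psum (f : nat -> C) (N : nat) : C :=
  match N with O => RtoC 0 | S N => Cplus (psum f N) (f N) end.

Lemma psum_ext f g N : (forall n, (n < N)%nat -> f n = g n) -> psum f N = psum g N.
Proof.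
  induction N; intros H; simpl; auto. rewrite IHN, H; auto.
Qed.

Lemma is_RInt_value (f : R -> C) a b (l l' : C) :
  is_RInt (V:=C_R_CompleteNormedModule) f a b l -> l = l' -> is_RInt (V:=C_R_CompleteNormedModule) f a b l'.
Proof. intros H ->; exact H. Qed.

Lemma is_RInt_C0 a b : is_RInt (V:=C_R_CompleteNormedModule) (fun _ => RtoC 0) a b (RtoC 0).
Proof.
  apply is_RInt_value with (scal (V:=C_R_CompleteNormedModule) (b - a) (RtoC 0)).
  apply (is_RInt_const (V:=C_R_CompleteNormedModule)).
  apply C_ext; simpl; unfold mult; simpl; change (@eq R ((b - a) * 0) 0); ring.
Qed.

Lemma is_RInt_Cplus (f g : R -> C) a b lf lg :
  is_RInt (V:=C_R_CompleteNormedModule) f a b lf -> is_RInt (V:=C_R_CompleteNormedModule) g a b lg ->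
  is_RInt (V:=C_R_CompleteNormedModule) (fun x => Cplus (f x) (g x)) a b (Cplus lf lg).
Proof. intros H1 H2. apply (is_RInt_plus (V:=C_R_CompleteNormedModule)); auto. Qed.

Lemma is_RInt_psum (f : nat -> R -> C) (l : nat -> C) a b N :
  (forall n, (n < N)%nat -> is_RInt (V:=C_R_CompleteNormedModule) (f n) a b (l n)) ->
  is_RInt (V:=C_R_CompleteNormedModule) (fun x => psum (fun n => f n x) N) a b (psum l N).
Proof.
  induction N; intros H; simpl.
  - apply is_RInt_C0.
  - apply (is_RInt_Cplus (fun x => psum (fun n => f n x) N) (f N)); auto.
Qed.

Lemma is_RInt_Cmult_r (f : R -> C) a b (l c : C) :
  is_RInt (V:=C_R_CompleteNormedModule) f a b l ->
  is_RInt (V:=C_R_CompleteNormedModule) (fun t => Cmult (f t) c) a b (Cmult l c).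
Proof.
  intros H. apply is_RInt_ext with (fun t => Cmult c (f t)). intros x _; apply Cmult_comm.
  replace (Cmult l c) with (Cmult c l) by ring. apply (is_RInt_Cmult f a b l c H).
Qed.

Lemma psum_mult_l (c : C) f N : Cmult c (psum f N) = psum (fun n => Cmult c (f n)) N.
Proof. induction N; simpl. ring. rewrite <- IHN. ring. Qed.

(* the geometric expansion of (q-1)/(q+1) *)
Definition cc (n : nat) : C := match n with O => RtoC (-1) | _ => RtoC (-2 * (-1) ^ n) end.

Lemma RtoC_pow_m1 n : RtoC ((-1) ^ n) = Cpow (RtoC (-1)) n.
Proof. induction n; simpl. reflexivity. rewrite <- IHn. apply C_ext; simpl; ring. Qed.

Lemma geom_exact q M : Cplus q (RtoC 1) <> RtoC 0 ->
  Cminus (Cdiv (Cminus q (RtoC 1)) (Cplus q (RtoC 1))) (psum (fun n => Cmult (cc n) (Cpow q n)) (S M))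
  = Cdiv (Cmult (RtoC (-2)) (Cpow (Copp q) (S M))) (Cplus q (RtoC 1)).
Proof.
  intros Hq. induction M.
  - simpl. field. auto.
  - change (psum (fun n => Cmult (cc n) (Cpow q n)) (S (S M))) with
      (Cplus (psum (fun n => Cmult (cc n) (Cpow q n)) (S M)) (Cmult (cc (S M)) (Cpow q (S M)))).
    assert (E : forall x y z : C, Cminus x (Cplus y z) = Cminus (Cminus x y) z) by (intros; ring).
    rewrite E, IHM. unfold cc. rewrite RtoC_mult, RtoC_pow_m1.
    rewrite <- Cmult_assoc, <- Cpow_mult_l.
    replace (Cmult (RtoC (-1)) q) with (Copp q) by ring.
    change (Cpow (Copp q) (S (S M))) with (Cmult (Copp q) (Cpow (Copp q) (S M))).
    field. auto.
Qed.

Lemma geom_bound q lam N : Cmod q <= lam -> lam < 1 ->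
  Cmod (Cminus (Cdiv (Cminus q (RtoC 1)) (Cplus q (RtoC 1))) (psum (fun n => Cmult (cc n) (Cpow q n)) N))
  <= 2 * lam ^ N / (1 - lam).
Proof.
  intros Hq Hl.
  assert (H0 : 0 <= lam) by (eapply Rle_trans; [apply Cmod_ge_0|exact Hq]).
  assert (Hm : 1 - lam <= Cmod (Cplus q (RtoC 1))).
  { assert (T := Cmod_triangle (Cplus q (RtoC 1)) (Copp q)).
    replace (Cplus (Cplus q (RtoC 1)) (Copp q)) with (RtoC 1) in T by ring.
    rewrite Cmod_1, Cmod_opp in T. lra. }
  assert (Hnz : Cplus q (RtoC 1) <> RtoC 0).
  { intro E. rewrite E, Cmod_0 in Hm. lra. }
  destruct N as [|M].
  - simpl. replace (Cminus (Cdiv (Cminus q (RtoC 1)) (Cplus q (RtoC 1))) (RtoC 0))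
      with (Cdiv (Cminus q (RtoC 1)) (Cplus q (RtoC 1))) by ring.
    rewrite Cmod_div by auto.
    assert (Cmod (Cminus q (RtoC 1)) <= lam + 1).
    { unfold Cminus. eapply Rle_trans. apply Cmod_triangle. rewrite Cmod_opp, Cmod_1. lra. }
    apply Rle_trans with ((lam + 1) / (1 - lam)).
    + unfold Rdiv. apply Rmult_le_compat; auto. apply Cmod_ge_0.
      left; apply Rinv_0_lt_compat. eapply Rlt_le_trans; [|exact Hm]; lra.
      apply Rinv_le_contravar; lra.
    + unfold Rdiv. apply Rmult_le_compat_r. left; apply Rinv_0_lt_compat; lra. lra.
  - rewrite geom_exact by auto. rewrite Cmod_div by auto. rewrite Cmod_mult, Cmod_pow, Cmod_opp.
    rewrite Cmod_R. rewrite Rabs_left by lra.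
    unfold Rdiv. apply Rmult_le_compat.
    + apply Rmult_le_pos. lra. apply pow_le, Cmod_ge_0.
    + left; apply Rinv_0_lt_compat. eapply Rlt_le_trans; [|exact Hm]; lra.
    + replace (- -2) with 2 by ring. apply Rmult_le_compat_l. lra. apply pow_incr. split; auto. apply Cmod_ge_0.
    + apply Rinv_le_contravar; lra.
Qed.


Definition Kf (v w : C) : C := Cdiv (Cminus v w) (Cminus (Cminus (RtoC 1) v) w).

Definition DIntg R1 R2 (a b : C -> C) th ph :=
  Cmult (Cmult (Kf (circ R1 th) (circ R2 ph)) (Cmult (a (circ R1 th)) (circ_jac R1 th)))
        (Cmult (b (circ R2 ph)) (circ_jac R2 ph)).

Definition IC r (f : C -> C) := RInt (V:=C_R_CompleteNormedModule) (fun th => Cmult (f (circ r th)) (circ_jac r th)) 0 (2 * PI).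

Lemma PHol_cont2 rh f r th : PHol rh f -> rh < r -> cont2 (fun a b => f (circ a b)) r th.
Proof. intros [f' Hf] H. destruct (Hf r th H) as (_ & _ & A & _). exact A. Qed.

Lemma PHol_bound rh f r : PHol rh f -> rh < r ->
  { M : R | forall th, 0 <= th <= 2 * PI -> Cmod (Cmult (f (circ r th)) (circ_jac r th)) < M }.
Proof.
  intros Hf Hr.
  destruct (bounded_continuity (K:=R_AbsRing) (V:=C_R_NormedModule) (fun th => Cmult (f (circ r th)) (circ_jac r th)) 0 (2 * PI)) as [M HM].
  - intros x _. apply (cont2_continuous (fun a b => Cmult (f (circ a b)) (circ_jac a b))).
    apply (cont2_mult (fun a b => f (circ a b)) (fun a b => circ_jac a b)).
    apply (PHol_cont2 rh); auto. apply cont2_jac.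
  - exists M. intros th Hth. rewrite <- norm_C. apply HM; auto.
Qed.

Lemma PHol_isRInt rh f r : PHol rh f -> rh < r ->
  is_RInt (V:=C_R_CompleteNormedModule) (fun th => Cmult (f (circ r th)) (circ_jac r th)) 0 (2 * PI) (IC r f).
Proof. intros Hf Hr. apply (RInt_correct (V:=C_R_CompleteNormedModule)). apply (PHol_exRInt rh); auto. Qed.

Lemma psum_factor (A B : nat -> C) (x y : C) N :
  psum (fun n => Cmult (Cmult (A n) x) (Cmult (B n) y)) N = Cmult (Cmult (psum (fun n => Cmult (A n) (B n)) N) x) y.
Proof. induction N; simpl. ring. rewrite IHN. ring. Qed.

Lemma SEP_gen (rh : R) (a b : C -> C) (A B : nat -> C -> C) R1 R2 lam :
  rh < R1 -> rh < R2 -> 0 <= lam < 1 ->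
  (forall n, PHol rh (fun v => Cmult (A n v) (a v))) ->
  (forall n, PHol rh (fun w => Cmult (B n w) (b w))) ->
  PHol rh a -> PHol rh b ->
  (forall N th ph, Cmod (Cminus (Kf (circ R1 th) (circ R2 ph))
                         (psum (fun n => Cmult (A n (circ R1 th)) (B n (circ R2 ph))) N)) <= 2 * lam ^ N / (1 - lam)) ->
  exists L : C,
    filterlim (fun N => psum (fun n => Cmult (IC R1 (fun v => Cmult (A n v) (a v))) (IC R2 (fun w => Cmult (B n w) (b w)))) N)
       eventually (locally (T:=C_R_CompleteNormedModule) L) /\
    (forall th, 0 <= th <= 2 * PI -> ex_RInt (V:=C_R_CompleteNormedModule) (DIntg R1 R2 a b th) 0 (2 * PI)) /\
    is_RInt (V:=C_R_CompleteNormedModule) (fun th => RInt (V:=C_R_CompleteNormedModule) (DIntg R1 R2 a b th) 0 (2 * PI)) 0 (2 * PI) L.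
Proof.
  intros H1 H2 Hl HA HB Ha Hb Hbd.
  destruct (PHol_bound rh a R1 Ha H1) as [Ma HMa].
  destruct (PHol_bound rh b R2 Hb H2) as [Mb HMb].
  assert (Ma0 : 0 <= Ma). { eapply Rle_trans; [apply Cmod_ge_0|]. left; apply (HMa 0). split; [lra|]. pose proof PI_RGT_0; lra. }
  assert (Mb0 : 0 <= Mb). { eapply Rle_trans; [apply Cmod_ge_0|]. left; apply (HMb 0). split; [lra|]. pose proof PI_RGT_0; lra. }
  set (IA n := IC R1 (fun v => Cmult (A n v) (a v))).
  set (IB n := IC R2 (fun w => Cmult (B n w) (b w))).
  apply (DI_lim
    (fun N th ph => psum (fun n => Cmult (Cmult (Cmult (A n (circ R1 th)) (a (circ R1 th))) (circ_jac R1 th))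
                                         (Cmult (Cmult (B n (circ R2 ph)) (b (circ R2 ph))) (circ_jac R2 ph))) N)
    (DIntg R1 R2 a b)
    (fun N th => psum (fun n => Cmult (Cmult (Cmult (A n (circ R1 th)) (a (circ R1 th))) (circ_jac R1 th)) (IB n)) N)
    (fun N => psum (fun n => Cmult (IA n) (IB n)) N)
    (fun N => 2 * lam ^ N / (1 - lam) * Ma * Mb)).
  - pose proof PI_RGT_0; lra.
  - intros N th _. apply (is_RInt_psum (fun n ph => Cmult (Cmult (Cmult (A n (circ R1 th)) (a (circ R1 th))) (circ_jac R1 th))
                                         (Cmult (Cmult (B n (circ R2 ph)) (b (circ R2 ph))) (circ_jac R2 ph)))).
    intros n _. apply (is_RInt_Cmult (fun ph => (Cmult (Cmult (B n (circ R2 ph)) (b (circ R2 ph))) (circ_jac R2 ph)))).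
    apply (PHol_isRInt rh (fun w => Cmult (B n w) (b w))); auto.
  - intros N. apply (is_RInt_psum (fun n th => Cmult (Cmult (Cmult (A n (circ R1 th)) (a (circ R1 th))) (circ_jac R1 th)) (IB n))).
    intros n _. apply (is_RInt_Cmult_r (fun th => Cmult (Cmult (A n (circ R1 th)) (a (circ R1 th))) (circ_jac R1 th))).
    apply (PHol_isRInt rh (fun v => Cmult (A n v) (a v))); auto.
  - intros N th ph Hth Hph.
    rewrite (psum_ext _ (fun n => Cmult (Cmult (A n (circ R1 th)) (Cmult (a (circ R1 th)) (circ_jac R1 th)))
                                  (Cmult (B n (circ R2 ph)) (Cmult (b (circ R2 ph)) (circ_jac R2 ph))))).
    2: { intros; ring. }
    rewrite psum_factor. unfold DIntg.
    replace (Cminus (Cmult (Cmult (psum (fun n => Cmult (A n (circ R1 th)) (B n (circ R2 ph))) N)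
                (Cmult (a (circ R1 th)) (circ_jac R1 th))) (Cmult (b (circ R2 ph)) (circ_jac R2 ph)))
                (Cmult (Cmult (Kf (circ R1 th) (circ R2 ph)) (Cmult (a (circ R1 th)) (circ_jac R1 th)))
        (Cmult (b (circ R2 ph)) (circ_jac R2 ph))))
      with (Cmult (Cmult (Copp (Cminus (Kf (circ R1 th) (circ R2 ph)) (psum (fun n => Cmult (A n (circ R1 th)) (B n (circ R2 ph))) N)))
                (Cmult (a (circ R1 th)) (circ_jac R1 th))) (Cmult (b (circ R2 ph)) (circ_jac R2 ph))) by ring.
    rewrite (Cmod_mult (Cmult _ _) (Cmult (b _) _)), (Cmod_mult (Copp _) (Cmult (a _) _)), Cmod_opp.
    specialize (HMa th Hth). specialize (HMb ph Hph). specialize (Hbd N th ph).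
    apply Rmult_le_compat.
    + apply Rmult_le_pos; apply Cmod_ge_0.
    + apply Cmod_ge_0.
    + apply Rmult_le_compat; [apply Cmod_ge_0 | apply Cmod_ge_0 | exact Hbd | lra].
    + lra.
  - intros e.
    assert (Hc : 0 < 2 / (1 - lam) * Ma * Mb + 1).
    { assert (0 <= 2 / (1 - lam) * Ma * Mb). apply Rmult_le_pos; auto. apply Rmult_le_pos; auto.
      unfold Rdiv; apply Rmult_le_pos; [lra|left; apply Rinv_0_lt_compat; lra]. lra. }
    assert (Hr : Rabs lam < 1) by (rewrite Rabs_pos_eq; lra).
    destruct (pow_lt_1_zero lam Hr (e / (2 / (1 - lam) * Ma * Mb + 1))) as [N0 HN0].
    apply Rdiv_lt_0_compat; auto. apply cond_pos.
    exists N0. intros N HN. specialize (HN0 N HN). rewrite Rabs_pos_eq in HN0 by (apply pow_le; lra).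
    assert (E : 2 * lam ^ N / (1 - lam) * Ma * Mb = lam ^ N * (2 / (1 - lam) * Ma * Mb)) by (unfold Rdiv; ring).
    rewrite E.
    apply Rle_lt_trans with (lam ^ N * (2 / (1 - lam) * Ma * Mb + 1)).
    apply Rmult_le_compat_l. apply pow_le; lra. lra.
    apply Rmult_lt_reg_r with (/ (2 / (1 - lam) * Ma * Mb + 1)). apply Rinv_0_lt_compat; auto.
    rewrite Rmult_assoc, Rinv_r, Rmult_1_r by lra. unfold Rdiv in HN0. exact HN0.
Qed.


Definition hC : C := RtoC (1/2).

Lemma Cmod_circ r th : 0 <= r -> Cmod (Cminus (circ r th) hC) = r.
Proof. apply Cmod_circ_sub. Qed.

Lemma sum_ne (u s : C) : Cmod u <> Cmod s -> Cplus u s <> RtoC 0.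
Proof.
  intros H E. apply H. replace s with (Copp u). rewrite Cmod_opp; auto.
  apply (f_equal (fun z => Cminus z u)) in E. 
  replace (Cminus (Cplus u s) u) with s in E by ring. rewrite E. ring.
Qed.

Lemma Cmod_ne0 (z : C) : 0 < Cmod z -> z <> RtoC 0.
Proof. intros H E. rewrite E, Cmod_0 in H. lra. Qed.

Lemma Kf_form (v w : C) : Cminus v hC <> RtoC 0 -> Cminus w hC <> RtoC 0 ->
  Cplus (Cminus v hC) (Cminus w hC) <> RtoC 0 ->
  Kf v w = Cdiv (Cminus (Cminus w hC) (Cminus v hC)) (Cplus (Cminus v hC) (Cminus w hC)).
Proof.
  intros Hu Hs Hus. unfold Kf, hC.
  assert (E : Cminus (Cminus (RtoC 1) v) w = Copp (Cplus (Cminus v hC) (Cminus w hC))).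
  { unfold hC. apply C_ext; simpl; field. }
  rewrite E. unfold hC in *. field. exact Hus.
Qed.

Definition AA n v := Cmult (cc n) (Cinv (Cpow (Cminus v hC) n)).
Definition BA n w := Cpow (Cminus w hC) n.
Definition AB n v := Cmult (Copp (cc n)) (Cpow (Cminus v hC) n).
Definition BB n w := Cinv (Cpow (Cminus w hC) n).

Lemma Cpow_div (s u : C) n : u <> RtoC 0 ->
  Cmult (Cinv (Cpow u n)) (Cpow s n) = Cpow (Cdiv s u) n.
Proof.
  intros Hu. unfold Cdiv. rewrite Cpow_mult_l, Cpow_inv by auto. ring.
Qed.

Lemma circ_sub_ne r th : 0 < r -> Cminus (circ r th) hC <> RtoC 0.
Proof. intros H. apply Cmod_ne0. rewrite Cmod_circ; lra. Qed.

Lemma caseA_bound R1 R2 N th ph : 0 < R2 -> R2 < R1 ->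
  Cmod (Cminus (Kf (circ R1 th) (circ R2 ph))
         (psum (fun n => Cmult (AA n (circ R1 th)) (BA n (circ R2 ph))) N)) <= 2 * (R2 / R1) ^ N / (1 - R2 / R1).
Proof.
  intros H0 H1.
  set (u := Cminus (circ R1 th) hC). set (s := Cminus (circ R2 ph) hC).
  assert (Hu : Cmod u = R1) by (apply Cmod_circ; lra).
  assert (Hs : Cmod s = R2) by (apply Cmod_circ; lra).
  assert (Hu0 : u <> RtoC 0) by (apply Cmod_ne0; lra).
  assert (Hs0 : s <> RtoC 0) by (apply Cmod_ne0; lra).
  assert (Hus : Cplus u s <> RtoC 0) by (apply sum_ne; lra).
  set (q := Cdiv s u).
  assert (Hq : Cmod q = R2 / R1) by (unfold q; rewrite Cmod_div; auto; rewrite Hu, Hs; auto).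
  assert (Hq1 : Cplus q (RtoC 1) <> RtoC 0).
  { intro E. apply Hus. unfold q in E. apply (f_equal (fun z => Cmult z u)) in E.
    replace (Cmult (Cplus (Cdiv s u) (RtoC 1)) u) with (Cplus u s) in E by (field; auto).
    rewrite E. ring. }
  rewrite (Kf_form _ _ Hu0 Hs0 Hus). fold u s.
  replace (Cdiv (Cminus s u) (Cplus u s)) with (Cdiv (Cminus q (RtoC 1)) (Cplus q (RtoC 1))).
  2: { unfold q. field. split; auto. }
  rewrite (psum_ext _ (fun n => Cmult (cc n) (Cpow q n))).
  2: { intros n _. unfold AA, BA. fold u s. unfold q. rewrite <- Cpow_div by auto. ring. }
  apply geom_bound. rewrite Hq; lra.
  apply Rmult_lt_reg_r with R1. lra. unfold Rdiv. rewrite Rmult_assoc, Rinv_l, Rmult_1_r by lra. lra.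
Qed.

Lemma caseB_bound R1 R2 N th ph : 0 < R1 -> R1 < R2 ->
  Cmod (Cminus (Kf (circ R1 th) (circ R2 ph))
         (psum (fun n => Cmult (AB n (circ R1 th)) (BB n (circ R2 ph))) N)) <= 2 * (R1 / R2) ^ N / (1 - R1 / R2).
Proof.
  intros H0 H1.
  set (u := Cminus (circ R1 th) hC). set (s := Cminus (circ R2 ph) hC).
  assert (Hu : Cmod u = R1) by (apply Cmod_circ; lra).
  assert (Hs : Cmod s = R2) by (apply Cmod_circ; lra).
  assert (Hu0 : u <> RtoC 0) by (apply Cmod_ne0; lra).
  assert (Hs0 : s <> RtoC 0) by (apply Cmod_ne0; lra).
  assert (Hus : Cplus u s <> RtoC 0) by (apply sum_ne; lra).
  set (q := Cdiv u s).
  assert (Hq : Cmod q = R1 / R2) by (unfold q; rewrite Cmod_div; auto; rewrite Hu, Hs; auto).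
  assert (Hq1 : Cplus q (RtoC 1) <> RtoC 0).
  { intro E. apply Hus. unfold q in E. apply (f_equal (fun z => Cmult z s)) in E.
    replace (Cmult (Cplus (Cdiv u s) (RtoC 1)) s) with (Cplus u s) in E by (field; auto).
    rewrite E. ring. }
  rewrite (Kf_form _ _ Hu0 Hs0 Hus). fold u s.
  replace (Cdiv (Cminus s u) (Cplus u s)) with (Copp (Cdiv (Cminus q (RtoC 1)) (Cplus q (RtoC 1)))).
  2: { unfold q. field. split; auto. }
  rewrite (psum_ext _ (fun n => Cmult (RtoC (-1)) (Cmult (cc n) (Cpow q n)))).
  2: { intros n _. unfold AB, BB. fold u s. unfold q. rewrite <- Cpow_div by auto. ring. }
  rewrite <- psum_mult_l.
  replace (Cminus (Copp (Cdiv (Cminus q (RtoC 1)) (Cplus q (RtoC 1)))) (Cmult (RtoC (-1)) (psum (fun n => Cmult (cc n) (Cpow q n)) N)))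
    with (Copp (Cminus (Cdiv (Cminus q (RtoC 1)) (Cplus q (RtoC 1))) (psum (fun n => Cmult (cc n) (Cpow q n)) N))) by ring.
  rewrite Cmod_opp.
  apply geom_bound. rewrite Hq; lra.
  apply Rmult_lt_reg_r with R2. lra. unfold Rdiv. rewrite Rmult_assoc, Rinv_l, Rmult_1_r by lra. lra.
Qed.


Definition DI R1 R2 a b := RInt (V:=C_R_CompleteNormedModule)
  (fun th => RInt (V:=C_R_CompleteNormedModule) (DIntg R1 R2 a b th) 0 (2 * PI)) 0 (2 * PI).

Lemma PHol_sub_nz alpha n : forall r th, rho alpha < r -> Cpow (Cminus (circ r th) hC) n <> RtoC 0.
Proof.
  intros r th Hr. apply Cpow_nz. apply circ_sub_ne. pose proof (rho_ge_half alpha); lra.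
Qed.

Lemma PHol_sub alpha n : PHol (rho alpha) (fun v => Cpow (Cminus v hC) n).
Proof. apply PHol_Cpow. apply PHol_minus, PHol_id. Qed.

Lemma PHol_AA alpha a n : PHol (rho alpha) a -> PHol (rho alpha) (fun v => Cmult (AA n v) (a v)).
Proof.
  intros Ha. apply PHol_mult; auto. unfold AA. apply PHol_mult. apply PHol_const.
  apply PHol_inv. apply PHol_sub. apply PHol_sub_nz.
Qed.
Lemma PHol_BA alpha a n : PHol (rho alpha) a -> PHol (rho alpha) (fun v => Cmult (BA n v) (a v)).
Proof. intros Ha. apply PHol_mult; auto. apply PHol_sub. Qed.
Lemma PHol_AB alpha a n : PHol (rho alpha) a -> PHol (rho alpha) (fun v => Cmult (AB n v) (a v)).
Proof. intros Ha. apply PHol_mult; auto. unfold AB. apply PHol_mult. apply PHol_const. apply PHol_sub. Qed.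
Lemma PHol_BB alpha a n : PHol (rho alpha) a -> PHol (rho alpha) (fun v => Cmult (BB n v) (a v)).
Proof.
  intros Ha. apply PHol_mult; auto. unfold BB.
  apply PHol_inv. apply PHol_sub. apply PHol_sub_nz.
Qed.

Lemma lim_unique_C (S : nat -> C) (L1 L2 : C) :
  filterlim S eventually (locally (T:=C_R_CompleteNormedModule) L1) ->
  filterlim S eventually (locally (T:=C_R_CompleteNormedModule) L2) -> L1 = L2.
Proof.
  intros H1 H2. apply (filterlim_locally_unique (K:=R_AbsRing) (V:=C_R_NormedModule) (F:=eventually) S L1 L2); auto.
Qed.

Lemma half_pos alpha : 0 < rho alpha.
Proof. pose proof (rho_ge_half alpha); lra. Qed.

Lemma SEP_caseA alpha a b R1 R2 : PHol (rho alpha) a -> PHol (rho alpha) b ->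
  rho alpha < R1 -> rho alpha < R2 -> R2 < R1 ->
  exists L : C,
    filterlim (fun N => psum (fun n => Cmult (IC R1 (fun v => Cmult (AA n v) (a v))) (IC R2 (fun w => Cmult (BA n w) (b w)))) N)
       eventually (locally (T:=C_R_CompleteNormedModule) L) /\
    (forall th, 0 <= th <= 2 * PI -> ex_RInt (V:=C_R_CompleteNormedModule) (DIntg R1 R2 a b th) 0 (2 * PI)) /\
    is_RInt (V:=C_R_CompleteNormedModule) (fun th => RInt (V:=C_R_CompleteNormedModule) (DIntg R1 R2 a b th) 0 (2 * PI)) 0 (2 * PI) L.
Proof.
  intros Ha Hb H1 H2 H12. pose proof (half_pos alpha).
  apply (SEP_gen (rho alpha) a b AA BA R1 R2 (R2 / R1)).
  - exact H1.
  - exact H2.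
  - split. left; apply Rdiv_lt_0_compat; lra. apply Rmult_lt_reg_r with R1. lra. unfold Rdiv. rewrite Rmult_assoc, Rinv_l, Rmult_1_r by lra. lra.
  - intros n; apply PHol_AA; auto.
  - intros n; apply PHol_BA; auto.
  - exact Ha.
  - exact Hb.
  - intros N th ph. apply caseA_bound; lra.
Qed.

Lemma SEP_caseB alpha a b R1 R2 : PHol (rho alpha) a -> PHol (rho alpha) b ->
  rho alpha < R1 -> rho alpha < R2 -> R1 < R2 ->
  exists L : C,
    filterlim (fun N => psum (fun n => Cmult (IC R1 (fun v => Cmult (AB n v) (a v))) (IC R2 (fun w => Cmult (BB n w) (b w)))) N)
       eventually (locally (T:=C_R_CompleteNormedModule) L) /\
    (forall th, 0 <= th <= 2 * PI -> ex_RInt (V:=C_R_CompleteNormedModule) (DIntg R1 R2 a b th) 0 (2 * PI)) /\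
    is_RInt (V:=C_R_CompleteNormedModule) (fun th => RInt (V:=C_R_CompleteNormedModule) (DIntg R1 R2 a b th) 0 (2 * PI)) 0 (2 * PI) L.
Proof.
  intros Ha Hb H1 H2 H12. pose proof (half_pos alpha).
  apply (SEP_gen (rho alpha) a b AB BB R1 R2 (R1 / R2)).
  - exact H1.
  - exact H2.
  - split. left; apply Rdiv_lt_0_compat; lra. apply Rmult_lt_reg_r with R2. lra. unfold Rdiv. rewrite Rmult_assoc, Rinv_l, Rmult_1_r by lra. lra.
  - intros n; apply PHol_AB; auto.
  - intros n; apply PHol_BB; auto.
  - exact Ha.
  - exact Hb.
  - intros N th ph. apply caseB_bound; lra.
Qed.

Lemma DI_ok alpha a b R1 R2 : PHol (rho alpha) a -> PHol (rho alpha) b ->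
  rho alpha < R1 -> rho alpha < R2 -> R1 <> R2 ->
  (forall th, 0 <= th <= 2 * PI -> ex_RInt (V:=C_R_CompleteNormedModule) (DIntg R1 R2 a b th) 0 (2 * PI)) /\
  is_RInt (V:=C_R_CompleteNormedModule) (fun th => RInt (V:=C_R_CompleteNormedModule) (DIntg R1 R2 a b th) 0 (2 * PI)) 0 (2 * PI) (DI R1 R2 a b).
Proof.
  intros Ha Hb H1 H2 H12.
  destruct (Rtotal_order R1 R2) as [H|[H|H]]; [|contradiction|].
  - destruct (SEP_caseB alpha a b R1 R2) as [L [_ [HL1 HL2]]]; auto.
    split; auto. unfold DI. rewrite (is_RInt_unique _ _ _ _ HL2). auto.
  - destruct (SEP_caseA alpha a b R1 R2) as [L [_ [HL1 HL2]]]; auto.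
    split; auto. unfold DI. rewrite (is_RInt_unique _ _ _ _ HL2). auto.
Qed.

Lemma IC_inv rh f r1 r2 : PHol rh f -> rh < r1 -> rh < r2 -> IC r1 f = IC r2 f.
Proof. intros. unfold IC. apply ANN_main with rh; assumption. Qed.

Lemma DI_inv alpha a b R1 R2 R1' R2' : PHol (rho alpha) a -> PHol (rho alpha) b ->
  rho alpha < R1 -> rho alpha < R2 -> rho alpha < R1' -> rho alpha < R2' ->
  ((R2 < R1 /\ R2' < R1') \/ (R1 < R2 /\ R1' < R2')) ->
  DI R1 R2 a b = DI R1' R2' a b.
Proof.
  intros Ha Hb H1 H2 H1' H2' [[H H']|[H H']].
  - destruct (SEP_caseA alpha a b R1 R2) as [L [HL0 [_ HL]]]; try assumption.
    destruct (SEP_caseA alpha a b R1' R2') as [L' [HL0' [_ HL']]]; try assumption.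
    unfold DI. rewrite (is_RInt_unique _ _ _ _ HL), (is_RInt_unique _ _ _ _ HL').
    apply (lim_unique_C _ _ _ HL0).
    eapply filterlim_ext; [|exact HL0']. intros N. apply psum_ext. intros n _.
    rewrite (IC_inv (rho alpha) (fun v => Cmult (AA n v) (a v)) R1' R1), (IC_inv (rho alpha) (fun w => Cmult (BA n w) (b w)) R2' R2);
      try assumption; [reflexivity | apply PHol_BA | apply PHol_AA]; assumption.
  - destruct (SEP_caseB alpha a b R1 R2) as [L [HL0 [_ HL]]]; try assumption.
    destruct (SEP_caseB alpha a b R1' R2') as [L' [HL0' [_ HL']]]; try assumption.
    unfold DI. rewrite (is_RInt_unique _ _ _ _ HL), (is_RInt_unique _ _ _ _ HL').
    apply (lim_unique_C _ _ _ HL0).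
    eapply filterlim_ext; [|exact HL0']. intros N. apply psum_ext. intros n _.
    rewrite (IC_inv (rho alpha) (fun v => Cmult (AB n v) (a v)) R1' R1), (IC_inv (rho alpha) (fun w => Cmult (BB n w) (b w)) R2' R2);
      try assumption; [reflexivity | apply PHol_BB | apply PHol_AB]; assumption.
Qed.


Definition ab (j m : nat) : R := Binomial.C (m + j) m.

Lemma binC_n_0 n : Binomial.C n 0 = 1.
Proof.
  unfold Binomial.C. rewrite Nat.sub_0_r. simpl. field.
  apply not_0_INR, fact_neq_0.
Qed.
Lemma binC_n_n n : Binomial.C n n = 1.
Proof.
  unfold Binomial.C. rewrite Nat.sub_diag. simpl. field.
  apply not_0_INR, fact_neq_0.
Qed.
Lemma binC_pos n k : 0 <= Binomial.C n k.
Proof.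
  unfold Binomial.C. left. apply Rdiv_lt_0_compat. apply INR_fact_lt_0.
  apply Rmult_lt_0_compat; apply INR_fact_lt_0.
Qed.

Lemma ab_0 j : ab j 0 = 1.
Proof. apply binC_n_0. Qed.
Lemma ab_j0 m : ab 0 m = 1.
Proof. unfold ab. rewrite Nat.add_0_r. apply binC_n_n. Qed.
Lemma ab_pos j m : 0 <= ab j m.
Proof. apply binC_pos. Qed.
Lemma ab_pascal j m : ab (S j) (S m) = ab j (S m) + ab (S j) m.
Proof.
  unfold ab.
  replace (S m + j)%nat with (m + S j)%nat by lia.
  replace (S m + S j)%nat with (S (m + S j))%nat by lia.
  rewrite <- (pascal (m + S j) m) by lia. ring.
Qed.

Lemma Theta_ab j m : Theta (S j) (S m) = ab j m.
Proof. unfold Theta, ab. f_equal; lia. Qed.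

Definition Pc j M (z : C) := psum (fun m => Cmult (RtoC (ab j m)) (Cpow z m)) M.

Fixpoint psumR (f : nat -> R) (N : nat) : R :=
  match N with O => 0 | S N => psumR f N + f N end.

Definition Pr j M lam := psumR (fun m => ab j m * lam ^ m) M.

Lemma Pc_real j M lam : Pc j M (RtoC lam) = RtoC (Pr j M lam).
Proof.
  induction M; simpl. reflexivity. unfold Pc in *. simpl. rewrite IHM.
  rewrite <- RtoC_pow. change (Pr j (S M) lam) with (Pr j M lam + ab j M * lam ^ M). rewrite RtoC_plus, RtoC_mult. reflexivity.
Qed.

Lemma Pc_rec j z M : Pc (S j) (S M) z = Cplus (Pc j (S M) z) (Cmult z (Pc (S j) M z)).
Proof.
  induction M.
  - unfold Pc; simpl. rewrite !ab_0. ring.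
  - unfold Pc in *. change (psum (fun m => Cmult (RtoC (ab (S j) m)) (Cpow z m)) (S (S M)))
      with (Cplus (psum (fun m => Cmult (RtoC (ab (S j) m)) (Cpow z m)) (S M)) (Cmult (RtoC (ab (S j) (S M))) (Cpow z (S M)))).
    rewrite IHM at 1. rewrite ab_pascal. simpl. rewrite RtoC_plus. ring.
Qed.

Lemma Pr_rec j lam M : Pr (S j) (S M) lam = Pr j (S M) lam + lam * Pr (S j) M lam.
Proof.
  apply RtoC_inj. rewrite RtoC_plus, RtoC_mult, <- !Pc_real. apply Pc_rec.
Qed.

Lemma Pc0 M z : Cmult (Cminus (RtoC 1) z) (Pc 0 M z) = Cminus (RtoC 1) (Cpow z M).
Proof.
  induction M; unfold Pc in *; simpl. ring.
  rewrite ab_j0.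
  transitivity (Cplus (Cmult (Cminus (RtoC 1) z) (psum (fun m => Cmult (RtoC (ab 0 m)) (Cpow z m)) M)) (Cmult (Cminus (RtoC 1) z) (Cmult (RtoC 1) (Cpow z M)))).
  ring.
  rewrite IHM. ring.
Qed.

Lemma Cmod_1_minus z lam : Cmod z <= lam -> 1 - lam <= Cmod (Cminus (RtoC 1) z).
Proof.
  intros H. assert (T := Cmod_triangle (Cminus (RtoC 1) z) z).
  replace (Cplus (Cminus (RtoC 1) z) z) with (RtoC 1) in T by ring. rewrite Cmod_1 in T. lra.
Qed.

Lemma Pr0 M lam : (1 - lam) * Pr 0 M lam = 1 - lam ^ M.
Proof.
  apply RtoC_inj. rewrite RtoC_mult, RtoC_minus, <- Pc_real, RtoC_minus, RtoC_pow.
  apply Pc0.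
Qed.

Lemma Pc_S j M z : Pc j (S M) z = Cplus (Pc j M z) (Cmult (RtoC (ab j M)) (Cpow z M)).
Proof. reflexivity. Qed.
Lemma Pr_S j M lam : Pr j (S M) lam = Pr j M lam + ab j M * lam ^ M.
Proof. reflexivity. Qed.

Lemma Pc_bound j : forall M z lam, 0 <= lam < 1 -> Cmod z <= lam ->
  Cmod (Cminus (Pc j M z) (Cinv (Cpow (Cminus (RtoC 1) z) (S j)))) <= / (1 - lam) ^ (S j) - Pr j M lam.
Proof.
  induction j as [|j IH]; intros M z lam Hl Hz.
  - assert (Hw := Cmod_1_minus z lam Hz).
    assert (Hw0 : Cminus (RtoC 1) z <> RtoC 0) by (apply Cmod_ne0; lra).
    assert (E : Cminus (Pc 0 M z) (Cinv (Cpow (Cminus (RtoC 1) z) 1)) = Copp (Cdiv (Cpow z M) (Cminus (RtoC 1) z))).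
    { assert (H0 := Pc0 M z). 
      replace (Pc 0 M z) with (Cdiv (Cminus (RtoC 1) (Cpow z M)) (Cminus (RtoC 1) z)).
      simpl. field. auto. rewrite <- H0. field. auto. }
    rewrite E, Cmod_opp, Cmod_div, Cmod_pow by auto.
    assert (Hp := Pr0 M lam).
    replace (/ (1 - lam) ^ 1 - Pr 0 M lam) with (lam ^ M / (1 - lam)).
    2: { apply Rmult_eq_reg_l with (1 - lam). 2: lra. rewrite Rmult_minus_distr_l, Hp. field. lra. }
    unfold Rdiv. apply Rmult_le_compat. apply pow_le, Cmod_ge_0.
    left; apply Rinv_0_lt_compat; lra. apply pow_incr. split; auto. apply Cmod_ge_0.
    apply Rinv_le_contravar; lra.
  - assert (Hw := Cmod_1_minus z lam Hz).
    set (w := Cminus (RtoC 1) z) in *.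
    assert (Hw0 : w <> RtoC 0) by (apply Cmod_ne0; lra).
    assert (Hl1 : 0 < 1 - lam) by lra.
    destruct M as [|M].
    + unfold Pc, Pr; simpl. replace (Cminus (RtoC 0) (Cinv (Cmult w (Cmult w (Cpow w j))))) with
        (Copp (Cinv (Cpow w (S (S j))))) by (simpl; ring).
      rewrite Cmod_opp, Cmod_inv, Cmod_pow by (apply Cpow_nz; auto).
      rewrite Rminus_0_r. simpl.
      assert (0 < (1 - lam) ^ j) by (apply pow_lt; lra).
      assert ((1 - lam) ^ j <= Cmod w ^ j) by (apply pow_incr; lra).
      apply Rinv_le_contravar. repeat apply Rmult_lt_0_compat; lra.
      apply Rmult_le_compat; try lra. apply Rmult_le_pos; lra.
      apply Rmult_le_compat; try lra.
    + specialize (IH (S M) z lam Hl Hz).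
      set (D := / (1 - lam) ^ S (S j) - Pr (S j) (S M) lam).
      assert (Eq : Cmult w (Cminus (Pc (S j) (S M) z) (Cinv (Cpow w (S (S j))))) =
                   Cminus (Cminus (Pc j (S M) z) (Cinv (Cpow w (S j)))) (Cmult z (Cmult (RtoC (ab (S j) M)) (Cpow z M)))).
      { assert (R1 := Pc_rec j z M). assert (HS := Pc_S (S j) M z).
        set (P := Pc (S j) (S M) z) in *. set (T := Pc j (S M) z) in *. set (P' := Pc (S j) M z) in *.
        assert (HT : T = Cminus P (Cmult z P')) by (rewrite R1; ring).
        rewrite HT. assert (HP' : P' = Cminus P (Cmult (RtoC (ab (S j) M)) (Cpow z M))) by (rewrite HS; ring).
        rewrite HP'.
        change (Cpow w (S (S j))) with (Cmult w (Cpow w (S j))).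
        unfold w. field. split; auto. apply Cpow_nz; auto. }
      assert (Eqr : (1 - lam) * Pr (S j) (S M) lam = Pr j (S M) lam - lam * (ab (S j) M * lam ^ M)).
      { assert (R1 := Pr_rec j lam M). assert (R2 := Pr_S (S j) M lam).
        assert (HT : Pr j (S M) lam = Pr (S j) (S M) lam - lam * Pr (S j) M lam) by lra.
        rewrite HT, R2. ring. }
      assert (Hb : Cmod w * Cmod (Cminus (Pc (S j) (S M) z) (Cinv (Cpow w (S (S j))))) <= (1 - lam) * D).
      { rewrite <- Cmod_mult, Eq. unfold Cminus at 1. eapply Rle_trans. apply Cmod_triangle.
        rewrite Cmod_opp, !Cmod_mult, Cmod_pow, Cmod_R, Rabs_pos_eq by apply ab_pos.
        unfold D. rewrite Rmult_minus_distr_l, Eqr.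
        assert (Cmod z * (ab (S j) M * Cmod z ^ M) <= lam * (ab (S j) M * lam ^ M)).
        { apply Rmult_le_compat; auto. apply Cmod_ge_0. apply Rmult_le_pos. apply ab_pos. apply pow_le, Cmod_ge_0.
          apply Rmult_le_compat_l. apply ab_pos. apply pow_incr. split; auto. apply Cmod_ge_0. }
        replace ((1 - lam) * / (1 - lam) ^ S (S j)) with (/ (1 - lam) ^ S j).
        2: { simpl. field. split; [apply pow_nonzero|]; lra. }
        unfold w. lra. }
      assert (HD : 0 <= D).
      { apply Rmult_le_reg_l with (1 - lam); auto. rewrite Rmult_0_r. eapply Rle_trans; [|exact Hb].
        apply Rmult_le_pos; apply Cmod_ge_0. }
      apply Rmult_le_reg_l with (Cmod w). lra.
      eapply Rle_trans. exact Hb. apply Rmult_le_compat_r; auto.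
Qed.

Lemma Pr_le j M lam : 0 <= lam < 1 -> Pr j M lam <= / (1 - lam) ^ (S j).
Proof.
  intros Hl. assert (H := Pc_bound j M (RtoC lam) lam Hl).
  rewrite Cmod_R, Rabs_pos_eq in H by lra. specialize (H (Rle_refl _)).
  pose proof (Cmod_ge_0 (Cminus (Pc j M (RtoC lam)) (Cinv (Cpow (Cminus (RtoC 1) (RtoC lam)) (S j))))). lra.
Qed.

Lemma Pr_incr j M lam : 0 <= lam -> Pr j M lam <= Pr j (S M) lam.
Proof.
  intros Hl. rewrite Pr_S. assert (0 <= ab j M * lam ^ M) by (apply Rmult_le_pos; [apply ab_pos | apply pow_le; lra]). lra.
Qed.

Lemma Pr_lim j lam : 0 <= lam < 1 -> is_lim_seq (fun M => Pr j M lam) (/ (1 - lam) ^ (S j)).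
Proof.
  intros Hl. induction j as [|j IH].
  - apply is_lim_seq_ext with (fun M => (1 - lam ^ M) / (1 - lam)).
    { intros M. rewrite <- (Pr0 M lam). field. lra. }
    replace (/ (1 - lam) ^ 1) with ((1 - 0) / (1 - lam)) by (simpl; field; lra).
    apply is_lim_seq_mult'. apply is_lim_seq_minus'. apply is_lim_seq_const.
    apply is_lim_seq_geom. rewrite Rabs_pos_eq; lra. apply is_lim_seq_const.
  -
    destruct (growing_cv (fun M => Pr (S j) M lam)) as [l Hl'].
    { intros M. apply Pr_incr; lra. }
    { exists (/ (1 - lam) ^ (S (S j))). intros x [M ->]. apply Pr_le; auto. }
    apply is_lim_seq_Reals in Hl'.
    assert (Ht : is_lim_seq (fun M => ab (S j) M * lam ^ M) 0).
    { apply is_lim_seq_ext with (fun M => Pr (S j) (S M) lam - Pr (S j) M lam).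
      intros M. rewrite Pr_S. ring.
      replace (Finite 0) with (Finite (l - l)) by (f_equal; ring).
      apply is_lim_seq_minus'; auto. apply (is_lim_seq_incr_1 (fun M => Pr (S j) M lam)). auto. }
    apply is_lim_seq_incr_1.
    apply is_lim_seq_ext with (fun M => (Pr j (S M) lam - lam * (ab (S j) M * lam ^ M)) / (1 - lam)).
    { intros M. assert (R1 := Pr_rec j lam M). assert (R2 := Pr_S (S j) M lam).
      assert (HT : Pr j (S M) lam = Pr (S j) (S M) lam - lam * Pr (S j) M lam) by lra.
      rewrite HT, R2. field. lra. }
    replace (/ (1 - lam) ^ S (S j)) with ((/ (1 - lam) ^ S j - lam * 0) * / (1 - lam)).
    2: { simpl. field. split; [apply pow_nonzero|]; lra. }
    apply is_lim_seq_mult'. apply is_lim_seq_minus'.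
    apply (is_lim_seq_incr_1 (fun M => Pr j M lam)). auto.
    apply is_lim_seq_mult'. apply is_lim_seq_const. auto. apply is_lim_seq_const.
Qed.


Lemma Cmod_eC th : Cmod (eC th) = 1.
Proof.
  unfold Cmod, eC; simpl. assert (H := sin2_cos2 th). unfold Rsqr in H.
  replace (cos th * (cos th * 1) + sin th * (sin th * 1)) with 1 by lra. apply sqrt_1.
Qed.

Lemma Cmod_jac r th : 0 <= r -> Cmod (circ_jac r th) = r.
Proof.
  intros H. rewrite jac_eC, Cmod_mult, Cmod_eC, Cmod_R, Rabs_pos_eq; lra.
Qed.

Lemma Kf_bound R1 R2 th ph : 0 < R1 -> 0 < R2 -> R1 <> R2 ->
  Cmod (Kf (circ R1 th) (circ R2 ph)) <= (R1 + R2) / Rabs (R1 - R2).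
Proof.
  intros H1 H2 H12.
  set (u := Cminus (circ R1 th) hC). set (s := Cminus (circ R2 ph) hC).
  assert (Hu : Cmod u = R1) by (apply Cmod_circ; lra).
  assert (Hs : Cmod s = R2) by (apply Cmod_circ; lra).
  assert (Hu0 : u <> RtoC 0) by (apply Cmod_ne0; lra).
  assert (Hs0 : s <> RtoC 0) by (apply Cmod_ne0; lra).
  assert (Hus : Cplus u s <> RtoC 0) by (apply sum_ne; lra).
  rewrite (Kf_form _ _ Hu0 Hs0 Hus). fold u s. rewrite Cmod_div by auto.
  assert (A1 : Cmod (Cminus s u) <= R1 + R2).
  { unfold Cminus. eapply Rle_trans. apply Cmod_triangle. rewrite Cmod_opp. lra. }
  assert (A2 : Rabs (R1 - R2) <= Cmod (Cplus u s)).
  { assert (T1 := Cmod_triangle (Cplus u s) (Copp s)).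
    assert (T2 := Cmod_triangle (Cplus u s) (Copp u)).
    replace (Cplus (Cplus u s) (Copp s)) with u in T1 by ring.
    replace (Cplus (Cplus u s) (Copp u)) with s in T2 by ring.
    rewrite Cmod_opp in T1, T2. apply Rabs_le. lra. }
  assert (A3 : 0 < Rabs (R1 - R2)) by (apply Rabs_pos_lt; lra).
  unfold Rdiv. apply Rmult_le_compat; auto. apply Cmod_ge_0.
  left; apply Rinv_0_lt_compat; lra. apply Rinv_le_contravar; auto.
Qed.

Lemma Cmod_bound_0 (f : C -> C) rh r : PHol rh f -> rh < r ->
  { M : R | forall th, 0 <= th <= 2 * PI -> Cmod (f (circ r th)) < M }.
Proof.
  intros Hf Hr.
  destruct (bounded_continuity (K:=R_AbsRing) (V:=C_R_NormedModule) (fun th => f (circ r th)) 0 (2 * PI)) as [M HM].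
  - intros x _. apply (cont2_continuous (fun a b => f (circ a b))).
    apply (PHol_cont2 rh); auto.
  - exists M. intros th Hth. rewrite <- norm_C. apply HM; auto.
Qed.

Lemma psum_DIntg_outer (A : nat -> C -> C) (c : nat -> R) b R1 R2 th ph M :
  psum (fun m => Cmult (RtoC (c m)) (DIntg R1 R2 (A m) b th ph)) M =
  Cmult (Cmult (Kf (circ R1 th) (circ R2 ph))
     (Cmult (psum (fun m => Cmult (RtoC (c m)) (A m (circ R1 th))) M) (circ_jac R1 th)))
     (Cmult (b (circ R2 ph)) (circ_jac R2 ph)).
Proof. induction M; simpl. ring. rewrite IHM. unfold DIntg. ring. Qed.

Lemma psum_DIntg_inner (B : nat -> C -> C) (c : nat -> R) a R1 R2 th ph M :
  psum (fun m => Cmult (RtoC (c m)) (DIntg R1 R2 a (B m) th ph)) M =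
  Cmult (Cmult (Kf (circ R1 th) (circ R2 ph)) (Cmult (a (circ R1 th)) (circ_jac R1 th)))
     (Cmult (psum (fun m => Cmult (RtoC (c m)) (B m (circ R2 ph))) M) (circ_jac R2 ph)).
Proof. induction M; simpl. ring. rewrite IHM. unfold DIntg. ring. Qed.

Lemma eps_scale (d : nat -> R) (K : R) : 0 <= K ->
  (forall e : posreal, eventually (fun M => d M < e)) ->
  (forall e : posreal, eventually (fun M => d M * K < e)).
Proof.
  intros HK Hd e.
  assert (Hp : 0 < e / (K + 1)) by (apply Rdiv_lt_0_compat; [apply cond_pos | lra]).
  destruct (Hd (mkposreal _ Hp)) as [N HN]. exists N. intros n Hn. specialize (HN n Hn). simpl in HN.
  destruct (Rle_or_lt (d n) 0) as [H|H].
  - apply Rle_lt_trans with 0. apply Rmult_le_0_r; auto. apply cond_pos.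
  - apply Rle_lt_trans with (d n * (K + 1)). apply Rmult_le_compat_l; lra.
    apply Rmult_lt_reg_r with (/ (K + 1)). apply Rinv_0_lt_compat; lra.
    rewrite Rmult_assoc, Rinv_r, Rmult_1_r by lra. exact HN.
Qed.

Lemma sum_outer alpha (A : nat -> C -> C) (c : nat -> R) Astar b R1 R2 (d : nat -> R) :
  PHol (rho alpha) b -> (forall m, PHol (rho alpha) (A m)) -> PHol (rho alpha) Astar ->
  rho alpha < R1 -> rho alpha < R2 -> R1 <> R2 ->
  (forall M th, 0 <= th <= 2 * PI -> Cmod (Cminus (psum (fun m => Cmult (RtoC (c m)) (A m (circ R1 th))) M) (Astar (circ R1 th))) <= d M) ->
  (forall e : posreal, eventually (fun M => d M < e)) ->
  filterlim (fun M => psum (fun m => Cmult (RtoC (c m)) (DI R1 R2 (A m) b)) M) eventually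
    (locally (T:=C_R_CompleteNormedModule) (DI R1 R2 Astar b)).
Proof.
  intros Hb HA HAs H1 H2 H12 Hd He.
  pose proof (half_pos alpha) as Hr0.
  destruct (PHol_bound (rho alpha) b R2 Hb H2) as [Mb HMb].
  assert (Mb0 : 0 <= Mb). { eapply Rle_trans; [apply Cmod_ge_0|]. left; apply (HMb 0). split; [lra|]. pose proof PI_RGT_0; lra. }
  set (BK := (R1 + R2) / Rabs (R1 - R2)).
  assert (BK0 : 0 <= BK).
  { unfold BK. apply Rmult_le_pos. lra. left; apply Rinv_0_lt_compat, Rabs_pos_lt; lra. }
  destruct (DI_lim
    (fun M th ph => psum (fun m => Cmult (RtoC (c m)) (DIntg R1 R2 (A m) b th ph)) M)
    (DIntg R1 R2 Astar b)
    (fun M th => psum (fun m => Cmult (RtoC (c m)) (RInt (V:=C_R_CompleteNormedModule) (DIntg R1 R2 (A m) b th) 0 (2 * PI))) M)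
    (fun M => psum (fun m => Cmult (RtoC (c m)) (DI R1 R2 (A m) b)) M)
    (fun M => d M * (BK * R1 * Mb)) 0 (2 * PI)) as [L [HL1 [_ HL2]]].
  - pose proof PI_RGT_0; lra.
  - intros M th Hth.
    apply (is_RInt_psum (fun m ph => Cmult (RtoC (c m)) (DIntg R1 R2 (A m) b th ph))).
    intros m _. apply (is_RInt_Cmult (DIntg R1 R2 (A m) b th)).
    apply (RInt_correct (V:=C_R_CompleteNormedModule)).
    apply (proj1 (DI_ok alpha (A m) b R1 R2 (HA m) Hb H1 H2 H12)); auto.
  - intros M.
    apply (is_RInt_psum (fun m th => Cmult (RtoC (c m)) (RInt (V:=C_R_CompleteNormedModule) (DIntg R1 R2 (A m) b th) 0 (2 * PI)))).
    intros m _. apply (is_RInt_Cmult (fun th => RInt (V:=C_R_CompleteNormedModule) (DIntg R1 R2 (A m) b th) 0 (2 * PI))).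
    apply (proj2 (DI_ok alpha (A m) b R1 R2 (HA m) Hb H1 H2 H12)).
  - intros M th ph Hth Hph. rewrite psum_DIntg_outer. unfold DIntg.
    match goal with |- Cmod (Cminus (Cmult (Cmult ?K (Cmult ?P ?J)) ?Bw) (Cmult (Cmult ?K (Cmult ?As ?J)) ?Bw)) <= _ =>
      replace (Cminus (Cmult (Cmult K (Cmult P J)) Bw) (Cmult (Cmult K (Cmult As J)) Bw))
        with (Cmult (Cmult K (Cmult (Cminus P As) J)) Bw) by ring end.
    set (K := Kf (circ R1 th) (circ R2 ph)).
    set (D := Cminus (psum (fun m : nat => Cmult (RtoC (c m)) (A m (circ R1 th))) M) (Astar (circ R1 th))).
    set (Bw := Cmult (b (circ R2 ph)) (circ_jac R2 ph)).
    rewrite (Cmod_mult (Cmult K (Cmult D (circ_jac R1 th))) Bw), (Cmod_mult K (Cmult D (circ_jac R1 th))),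
      (Cmod_mult D (circ_jac R1 th)), Cmod_jac by lra.
    specialize (HMb ph Hph). specialize (Hd M th Hth). fold D in Hd. fold Bw in HMb.
    assert (HK := Kf_bound R1 R2 th ph ltac:(lra) ltac:(lra) H12). fold BK K in HK.
    assert (0 <= Cmod K) by apply Cmod_ge_0.
    assert (0 <= Cmod D) by apply Cmod_ge_0.
    assert (0 <= Cmod Bw) by apply Cmod_ge_0.
    replace (d M * (BK * R1 * Mb)) with (BK * (d M * R1) * Mb) by ring.
    apply Rmult_le_compat. apply Rmult_le_pos; auto. apply Rmult_le_pos; lra. auto.
    apply Rmult_le_compat; auto. apply Rmult_le_pos; lra. apply Rmult_le_compat_r; lra.
    lra.
  - apply eps_scale; auto. apply Rmult_le_pos; auto. apply Rmult_le_pos; lra.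
  - replace (DI R1 R2 Astar b) with L. exact HL1.
    assert (H := proj2 (DI_ok alpha Astar b R1 R2 HAs Hb H1 H2 H12)).
    rewrite <- (is_RInt_unique _ _ _ _ H). rewrite (is_RInt_unique _ _ _ _ HL2). reflexivity.
Qed.

Lemma sum_inner alpha (B : nat -> C -> C) (c : nat -> R) Bstar a R1 R2 (d : nat -> R) :
  PHol (rho alpha) a -> (forall m, PHol (rho alpha) (B m)) -> PHol (rho alpha) Bstar ->
  rho alpha < R1 -> rho alpha < R2 -> R1 <> R2 ->
  (forall M ph, 0 <= ph <= 2 * PI -> Cmod (Cminus (psum (fun m => Cmult (RtoC (c m)) (B m (circ R2 ph))) M) (Bstar (circ R2 ph))) <= d M) ->
  (forall e : posreal, eventually (fun M => d M < e)) ->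
  filterlim (fun M => psum (fun m => Cmult (RtoC (c m)) (DI R1 R2 a (B m))) M) eventually
    (locally (T:=C_R_CompleteNormedModule) (DI R1 R2 a Bstar)).
Proof.
  intros Ha HB HBs H1 H2 H12 Hd He.
  pose proof (half_pos alpha) as Hr0.
  destruct (PHol_bound (rho alpha) a R1 Ha H1) as [Ma HMa].
  assert (Ma0 : 0 <= Ma). { eapply Rle_trans; [apply Cmod_ge_0|]. left; apply (HMa 0). split; [lra|]. pose proof PI_RGT_0; lra. }
  set (BK := (R1 + R2) / Rabs (R1 - R2)).
  assert (BK0 : 0 <= BK).
  { unfold BK. apply Rmult_le_pos. lra. left; apply Rinv_0_lt_compat, Rabs_pos_lt; lra. }
  destruct (DI_lim
    (fun M th ph => psum (fun m => Cmult (RtoC (c m)) (DIntg R1 R2 a (B m) th ph)) M)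
    (DIntg R1 R2 a Bstar)
    (fun M th => psum (fun m => Cmult (RtoC (c m)) (RInt (V:=C_R_CompleteNormedModule) (DIntg R1 R2 a (B m) th) 0 (2 * PI))) M)
    (fun M => psum (fun m => Cmult (RtoC (c m)) (DI R1 R2 a (B m))) M)
    (fun M => d M * (BK * R2 * Ma)) 0 (2 * PI)) as [L [HL1 [_ HL2]]].
  - pose proof PI_RGT_0; lra.
  - intros M th Hth.
    apply (is_RInt_psum (fun m ph => Cmult (RtoC (c m)) (DIntg R1 R2 a (B m) th ph))).
    intros m _. apply (is_RInt_Cmult (DIntg R1 R2 a (B m) th)).
    apply (RInt_correct (V:=C_R_CompleteNormedModule)).
    apply (proj1 (DI_ok alpha a (B m) R1 R2 Ha (HB m) H1 H2 H12)); auto.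
  - intros M.
    apply (is_RInt_psum (fun m th => Cmult (RtoC (c m)) (RInt (V:=C_R_CompleteNormedModule) (DIntg R1 R2 a (B m) th) 0 (2 * PI)))).
    intros m _. apply (is_RInt_Cmult (fun th => RInt (V:=C_R_CompleteNormedModule) (DIntg R1 R2 a (B m) th) 0 (2 * PI))).
    apply (proj2 (DI_ok alpha a (B m) R1 R2 Ha (HB m) H1 H2 H12)).
  - intros M th ph Hth Hph. rewrite psum_DIntg_inner. unfold DIntg.
    set (K := Kf (circ R1 th) (circ R2 ph)).
    set (D := Cminus (psum (fun m : nat => Cmult (RtoC (c m)) (B m (circ R2 ph))) M) (Bstar (circ R2 ph))).
    set (Av := Cmult (a (circ R1 th)) (circ_jac R1 th)).
    replace (Cminus (Cmult (Cmult K Av) (Cmult (psum (fun m : nat => Cmult (RtoC (c m)) (B m (circ R2 ph))) M) (circ_jac R2 ph)))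
       (Cmult (Cmult K Av) (Cmult (Bstar (circ R2 ph)) (circ_jac R2 ph))))
      with (Cmult (Cmult K Av) (Cmult D (circ_jac R2 ph))) by (unfold D; ring).
    rewrite (Cmod_mult (Cmult K Av) (Cmult D (circ_jac R2 ph))), (Cmod_mult K Av),
      (Cmod_mult D (circ_jac R2 ph)), Cmod_jac by lra.
    specialize (HMa th Hth). specialize (Hd M ph Hph). fold D in Hd. fold Av in HMa.
    assert (HK := Kf_bound R1 R2 th ph ltac:(lra) ltac:(lra) H12). fold BK K in HK.
    assert (0 <= Cmod K) by apply Cmod_ge_0.
    assert (0 <= Cmod D) by apply Cmod_ge_0.
    assert (0 <= Cmod Av) by apply Cmod_ge_0.
    replace (d M * (BK * R2 * Ma)) with (BK * Ma * (d M * R2)) by ring.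
    apply Rmult_le_compat. apply Rmult_le_pos; auto. apply Rmult_le_pos; lra.
    apply Rmult_le_compat; auto; lra.
    apply Rmult_le_compat_r; lra.
  - apply eps_scale; auto. apply Rmult_le_pos; auto. apply Rmult_le_pos; lra.
  - replace (DI R1 R2 a Bstar) with L. exact HL1.
    assert (H := proj2 (DI_ok alpha a Bstar R1 R2 Ha HBs H1 H2 H12)).
    rewrite <- (is_RInt_unique _ _ _ _ H). rewrite (is_RInt_unique _ _ _ _ HL2). reflexivity.
Qed.


Lemma Czpow_nat v n : Czpow v (Z.of_nat n) = Cpow v n.
Proof.
  destruct n as [|n]. reflexivity.
  simpl. rewrite SuccNat2Pos.id_succ. reflexivity.
Qed.

Lemma Czpow_negnat v m : v <> RtoC 0 -> Czpow v (1 - Z.of_nat (S m)) = Cpow (Cinv v) m.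
Proof.
  intros Hv. replace (1 - Z.of_nat (S m))%Z with (- Z.of_nat m)%Z by lia.
  destruct m as [|m]. reflexivity.
  rewrite Cpow_inv by auto.
  simpl. rewrite SuccNat2Pos.id_succ. reflexivity.
Qed.

Lemma Gfac_outer alpha t m v : v <> RtoC 0 -> Cminus v (RtoC 1) <> RtoC 0 -> Cminus v (RtoC alpha) <> RtoC 0 ->
  Gfac alpha t 1 (Z.of_nat (S m)) v = Cmult (Cpow (Cinv v) m) (Gfac alpha t 1 1 v).
Proof.
  intros H0 H1 Ha. unfold Gfac. rewrite Czpow_negnat by auto.
  replace (1 - 1)%Z with 0%Z by lia. simpl. field. split; auto.
Qed.

Lemma Gfac_star alpha t j v : v <> RtoC 0 -> Cminus v (RtoC 1) <> RtoC 0 -> Cminus v (RtoC alpha) <> RtoC 0 ->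
  Gfac alpha t (Z.of_nat (j + 1)) 1 v =
  Cmult (Cinv (Cpow (Cminus (RtoC 1) (Cinv v)) j)) (Gfac alpha t 1 1 v).
Proof.
  intros H0 H1 Ha. unfold Gfac.
  replace (Z.of_nat (j + 1) - 1)%Z with (Z.of_nat j) by lia.
  rewrite !Czpow_nat. replace (1 - 1)%Z with 0%Z by lia.
  replace (j + 1)%nat with (S j) by lia. simpl.
  replace (Cminus (RtoC 1) (Cinv v)) with (Cdiv (Cminus v (RtoC 1)) v) by (field; auto).
  unfold Cdiv. rewrite Cpow_mult_l, Cpow_inv by auto.
  field. repeat split; auto; apply Cpow_nz; auto.
Qed.

Lemma psum_mult_r f (X : C) N : psum (fun m => Cmult (f m) X) N = Cmult (psum f N) X.
Proof. induction N; simpl. ring. rewrite IHN. ring. Qed.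

Lemma Cmod_circ_lower r th : 0 <= r -> r - 1/2 <= Cmod (circ r th).
Proof.
  intros H. assert (T := Cmod_triangle (circ r th) (Copp hC)).
  change (Cplus (circ r th) (Copp hC)) with (Cminus (circ r th) hC) in T.
  rewrite Cmod_circ in T by auto. rewrite Cmod_opp in T. unfold hC in T. rewrite Cmod_R, Rabs_pos_eq in T by lra. lra.
Qed.

Lemma circ_nz3 alpha r th : rho alpha < r ->
  circ r th <> RtoC 0 /\ Cminus (circ r th) (RtoC 1) <> RtoC 0 /\ Cminus (circ r th) (RtoC alpha) <> RtoC 0.
Proof.
  intros H. split; [|split].
  - apply (circ_ne_real alpha 0); auto. apply abs_0_half.
  - apply (circ_minus_ne alpha); auto. apply abs_1_half.
  - apply (circ_minus_ne alpha); auto. apply rho_ge_alpha.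
Qed.

Lemma series_bound alpha t j0 r ME th M : rho alpha < r -> 3/2 < r ->
  (forall th, 0 <= th <= 2 * PI -> Cmod (Gfac alpha t 1 1 (circ r th)) < ME) -> 0 <= th <= 2 * PI ->
  Cmod (Cminus (psum (fun m => Cmult (RtoC (Theta (S j0) (S m))) (Gfac alpha t 1 (Z.of_nat (S m)) (circ r th))) M)
               (Gfac alpha t (Z.of_nat (S j0 + 1)) 1 (circ r th)))
  <= (/ (1 - / (r - 1/2)) ^ (S j0) - Pr j0 M (/ (r - 1/2))) * ME.
Proof.
  intros Hr Hr3 HME Hth.
  destruct (circ_nz3 alpha r th Hr) as (N0 & N1 & Na).
  set (v := circ r th) in *.
  rewrite (psum_ext _ (fun m => Cmult (Cmult (RtoC (ab j0 m)) (Cpow (Cinv v) m)) (Gfac alpha t 1 1 v))).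
  2: { intros m _. rewrite Theta_ab, Gfac_outer by auto. ring. }
  rewrite psum_mult_r. rewrite Gfac_star by auto.
  change (psum (fun m => Cmult (RtoC (ab j0 m)) (Cpow (Cinv v) m)) M) with (Pc j0 M (Cinv v)).
  replace (Cminus (Cmult (Pc j0 M (Cinv v)) (Gfac alpha t 1 1 v))
     (Cmult (Cinv (Cpow (Cminus (RtoC 1) (Cinv v)) (S j0))) (Gfac alpha t 1 1 v)))
    with (Cmult (Cminus (Pc j0 M (Cinv v)) (Cinv (Cpow (Cminus (RtoC 1) (Cinv v)) (S j0)))) (Gfac alpha t 1 1 v)) by ring.
  rewrite Cmod_mult.
  assert (Hv := Cmod_circ_lower r th ltac:(lra)). fold v in Hv.
  assert (Hl : 0 <= / (r - 1/2) < 1).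
  { split. left; apply Rinv_0_lt_compat; lra. rewrite <- Rinv_1. apply Rinv_lt_contravar; lra. }
  assert (Hz : Cmod (Cinv v) <= / (r - 1/2)).
  { rewrite Cmod_inv by auto. apply Rinv_le_contravar; lra. }
  apply Rmult_le_compat. apply Cmod_ge_0. apply Cmod_ge_0.
  apply Pc_bound; auto. left; apply HME; auto.
Qed.

Lemma lim_eventually (u : nat -> R) (l : R) : is_lim_seq u l ->
  forall e : posreal, eventually (fun M => l - u M < e).
Proof.
  intros H e. apply is_lim_seq_spec in H. destruct (H e) as [N HN]. exists N. intros n Hn.
  specialize (HN n Hn). apply Rabs_lt_between in HN. lra.
Qed.


Lemma Q_DI R1 R2 alpha t k l x y :
  Q R1 R2 alpha t k l x y = Cmult (RtoC (alpha ^ 2 / (2 * PI) ^ 2)) (DI R1 R2 (Gfac alpha t l y) (Gfac alpha t k x)).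
Proof.
  unfold Q, DI. f_equal. apply RInt_ext. intros th _. apply RInt_ext. intros ph _.
  assert (E : forall v w J1 J2 : C, @eq C (Cmult (Cmult (Qintegrand alpha t k l x y v w) J1) J2)
      (Cmult (Cmult (Kf v w) (Cmult (Gfac alpha t l y v) J1)) (Cmult (Gfac alpha t k x w) J2))).
  { intros. unfold Qintegrand, Kf. ring. }
  apply E.
Qed.

Lemma Cmod_le_ball (x y : C) (e : R) : ball (M:=C_R_CompleteNormedModule) x e y -> Cmod (Cminus y x) < 2 * e.
Proof.
  intros [H1 H2]. unfold ball in H1, H2; simpl in H1, H2.
  unfold AbsRing_ball, abs, minus, plus, opp in H1, H2; simpl in H1, H2.
  destruct x as [a b], y as [c d]. simpl in *.
  assert (T := Cmod_triangle (RtoC (c + - a)) (0, d + - b)).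
  replace (Cplus (RtoC (c + - a)) (0, d + - b)) with (Cminus (c, d) (a, b)) in T by (apply C_ext; simpl; ring).
  rewrite Cmod_R in T. unfold Cmod in T at 2. simpl in T.
  replace (0 * (0 * 1) + (d + - b) * ((d + - b) * 1)) with (Rsqr (d + - b)) in T by (unfold Rsqr; ring).
  rewrite sqrt_Rsqr_abs in T. lra.
Qed.

Lemma lim_Cmult (u : nat -> C) (L c : C) :
  filterlim u eventually (locally (T:=C_R_CompleteNormedModule) L) ->
  filterlim (fun n => Cmult c (u n)) eventually (locally (T:=C_R_CompleteNormedModule) (Cmult c L)).
Proof.
  intros H. apply filterlim_locally. intros e.
  assert (Hp : 0 < e / (2 * (Cmod c + 1))).
  { apply Rdiv_lt_0_compat. apply cond_pos. pose proof (Cmod_ge_0 c); lra. }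
  destruct (proj1 (filterlim_locally u L) H (mkposreal _ Hp)) as [N HN].
  exists N. intros n Hn. apply ball_C. specialize (HN n Hn). apply Cmod_le_ball in HN. simpl in HN.
  replace (Cminus (Cmult c (u n)) (Cmult c L)) with (Cmult c (Cminus (u n) L)) by ring.
  rewrite Cmod_mult.
  pose proof (Cmod_ge_0 c). pose proof (Cmod_ge_0 (Cminus (u n) L)).
  apply Rle_lt_trans with ((Cmod c + 1) * Cmod (Cminus (u n) L)). nra.
  replace (2 * (e / (2 * (Cmod c + 1)))) with (e / (Cmod c + 1)) in HN by (field; lra).
  apply Rmult_lt_reg_l with (/ (Cmod c + 1)). apply Rinv_0_lt_compat; lra.
  rewrite <- Rmult_assoc, Rinv_l, Rmult_1_l by lra. unfold Rdiv in HN. lra.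
Qed.

Lemma sum_n_psum (a : nat -> C) N : sum_n (G:=C_R_NormedModule) a N = psum a (S N).
Proof.
  induction N.
  - rewrite sum_O. simpl. apply C_ext; simpl; ring.
  - rewrite sum_Sn, IHN. reflexivity.
Qed.

Lemma lim_shift (u : nat -> C) (L : C) :
  filterlim u eventually (locally (T:=C_R_CompleteNormedModule) L) ->
  filterlim (fun n => u (S n)) eventually (locally (T:=C_R_CompleteNormedModule) L).
Proof.
  intros H. apply filterlim_locally. intros e.
  destruct (proj1 (filterlim_locally u L) H e) as [N HN].
  exists N. intros n Hn. apply HN. lia.
Qed.

Lemma is_series_psum (a : nat -> C) (L : C) :
  filterlim (psum a) eventually (locally (T:=C_R_CompleteNormedModule) L) ->
  is_series (V:=C_R_NormedModule) a L.
Proof.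
  intros H. unfold is_series.
  eapply filterlim_ext. intros N. symmetry. apply sum_n_psum.
  apply (lim_shift (psum a)). exact H.
Qed.


Theorem lemmaB3 (alpha t R1 R2 : R) (N i j : nat) :
  0 <= alpha -> 0 <= t ->
  rho alpha < R1 -> rho alpha < R2 -> R1 <> R2 ->
  (1 <= N)%nat -> (1 <= i <= N)%nat -> (1 <= j <= N)%nat ->
  exists Ssum : nat -> C,
    (forall n : nat,
       is_series (V := C_R_NormedModule)
         (fun m : nat =>
            Cmult (Cmult (RtoC (Theta i (S n)))
                         (Q R1 R2 alpha t 1 1 (Z.of_nat (S n)) (Z.of_nat (S m))))
                  (RtoC (Theta j (S m))))
         (Ssum n))
    /\ is_series (V := C_R_NormedModule) Ssum
         (Q R1 R2 alpha t (Z.of_nat (i + 1)) (Z.of_nat (j + 1)) 1 1).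
Proof.
  intros Ha Ht H1 H2 H12 HN Hi Hj.
  destruct i as [|i0]; [lia|]. destruct j as [|j0]; [lia|].
  pose proof (rho_ge_half alpha) as Hrh.
  set (R1' := R1 + 2). set (R2' := R2 + 2).
  assert (H1' : rho alpha < R1') by (unfold R1'; lra).
  assert (H2' : rho alpha < R2') by (unfold R2'; lra).
  assert (H12' : R1' <> R2') by (unfold R1', R2'; lra).
  assert (Hord : ((R2 < R1 /\ R2' < R1') \/ (R1 < R2 /\ R1' < R2'))).
  { unfold R1', R2'. destruct (Rtotal_order R1 R2) as [H|[H|H]]; [right|contradiction|left]; lra. }
  set (C0 := RtoC (alpha ^ 2 / (2 * PI) ^ 2)).
  set (G := Gfac alpha t).
  assert (PG : forall k x, PHol (rho alpha) (G k x)) by (intros; apply PHol_Gfac).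
  assert (Inv : forall a b, PHol (rho alpha) a -> PHol (rho alpha) b -> DI R1 R2 a b = DI R1' R2' a b).
  { intros a b Pa Pb. apply (DI_inv alpha); auto. }
  destruct (Cmod_bound_0 (G 1%Z 1%Z) (rho alpha) R1' (PG _ _) H1') as [ME1 HME1].
  destruct (Cmod_bound_0 (G 1%Z 1%Z) (rho alpha) R2' (PG _ _) H2') as [ME2 HME2].
  assert (ME1p : 0 <= ME1). { eapply Rle_trans; [apply Cmod_ge_0|]. left; apply (HME1 0). split; [lra|]. pose proof PI_RGT_0; lra. }
  assert (ME2p : 0 <= ME2). { eapply Rle_trans; [apply Cmod_ge_0|]. left; apply (HME2 0). split; [lra|]. pose proof PI_RGT_0; lra. }
  exists (fun n => Cmult (RtoC (Theta (S i0) (S n))) (Q R1 R2 alpha t 1 (Z.of_nat (S j0 + 1)) (Z.of_nat (S n)) 1)).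
  split.
  - intros n. apply is_series_psum.
    eapply filterlim_ext.
    { intros M. symmetry.
      rewrite (psum_ext _ (fun m => Cmult (Cmult (RtoC (Theta (S i0) (S n))) C0)
                 (Cmult (RtoC (Theta (S j0) (S m))) (DI R1' R2' (G 1%Z (Z.of_nat (S m))) (G 1%Z (Z.of_nat (S n))))))).
      2: { intros m _. rewrite Q_DI. rewrite Inv by auto. fold C0 G. ring. }
      rewrite <- psum_mult_l. reflexivity. }
    rewrite Q_DI, Inv by auto. fold C0 G.
    replace (Cmult (RtoC (Theta (S i0) (S n))) (Cmult C0 (DI R1' R2' (G (Z.of_nat (S j0 + 1)) 1%Z) (G 1%Z (Z.of_nat (S n))))))
      with (Cmult (Cmult (RtoC (Theta (S i0) (S n))) C0) (DI R1' R2' (G (Z.of_nat (S j0 + 1)) 1%Z) (G 1%Z (Z.of_nat (S n))))) by ring.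
    apply lim_Cmult.
    apply (sum_outer alpha (fun m => G 1%Z (Z.of_nat (S m))) (fun m => Theta (S j0) (S m)) (G (Z.of_nat (S j0 + 1)) 1%Z)
             (G 1%Z (Z.of_nat (S n))) R1' R2'
             (fun M => (/ (1 - / (R1' - 1/2)) ^ (S j0) - Pr j0 M (/ (R1' - 1/2))) * ME1)); auto.
    + intros M th Hth. apply (series_bound alpha t j0 R1' ME1 th M); auto. unfold R1'; lra.
    + apply eps_scale; auto. apply lim_eventually. apply Pr_lim.
      split. left; apply Rinv_0_lt_compat; unfold R1'; lra.
      rewrite <- Rinv_1. apply Rinv_lt_contravar; unfold R1'; lra.
  - apply is_series_psum.
    eapply filterlim_ext.
    { intros M. symmetry.
      rewrite (psum_ext _ (fun n => Cmult C0
                 (Cmult (RtoC (Theta (S i0) (S n))) (DI R1' R2' (G (Z.of_nat (S j0 + 1)) 1%Z) (G 1%Z (Z.of_nat (S n))))))).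
      2: { intros n _. rewrite Q_DI. rewrite Inv by auto. fold C0 G. ring. }
      rewrite <- psum_mult_l. reflexivity. }
    rewrite Q_DI, Inv by auto. fold C0 G.
    apply lim_Cmult.
    apply (sum_inner alpha (fun n => G 1%Z (Z.of_nat (S n))) (fun n => Theta (S i0) (S n)) (G (Z.of_nat (S i0 + 1)) 1%Z)
             (G (Z.of_nat (S j0 + 1)) 1%Z) R1' R2'
             (fun M => (/ (1 - / (R2' - 1/2)) ^ (S i0) - Pr i0 M (/ (R2' - 1/2))) * ME2)); auto.
    + intros M ph Hph. apply (series_bound alpha t i0 R2' ME2 ph M); auto. unfold R2'; lra.
    + apply eps_scale; auto. apply lim_eventually. apply Pr_lim.
      split. left; apply Rinv_0_lt_compat; unfold R2'; lra.
      rewrite <- Rinv_1. apply Rinv_lt_contravar; unfold R2'; lra.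
Qed.
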